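(* Let $\mathfrak{g}$ be one of the $6$-dimensional nilpotent Lie algebras $(0,0,12,13,14,34+52)$ or $(0,0,12,13,14+23,34+52)$. Then $\mathfrak{g}$ has no coherent splitting and no half-flat structure.
   Context: Notation: $(0,0,12,13,14,34+52)$ denotes the Lie algebra having a basis $e^1,\dots,e^6$ of $\mathfrak{g}^*$ with $de^1=de^2=0$, $de^3=e^{12}$, $de^4=e^{13}$, $de^5=e^{14}$, $de^6=e^{34}+e^{52}$, where $e^{ij}=e^i\wedge e^j$ and $d$ is the Chevalley–Eilenberg differential; similarly for the other algebra with $de^5=e^{14}+e^{23}$. An $\mathrm{SU}(3)$-structure on a $6$-dimensional Lie algebra is a pair $(\omega,\psi^+)\in\Lambda^2\mathfrak{g}^*\times\Lambda^3\mathfrak{g}^*$ such that for some basis $\eta^1,\dots,\eta^6$ of $\mathfrak{g}^*$ and some $3$-form $\psi^-$, $\omega=\eta^{12}+\eta^{34}+\eta^{56}$ and $\psi^++i\psi^-=(\eta^1+i\eta^2)\wedge(\eta^3+i\eta^4)\wedge(\eta^5+i\eta^6)$; it is half-flat if $d\omega\wedge\omega=0$ and $d\psi^+=0$. A coherent splitting is a decomposition $\mathfrak{g}^*=V_1\oplus V_2$ with $\dim V_1=2$ such that, with $\Lambda^{p,q}=\Lambda^pV_1\otimes\Lambda^qV_2$, $d(\Lambda^{p,q})\subset\Lambda^{p+1,q}+\Lambda^{p+2,q-1}$ for all $p,q$. *)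

(* Defs.v *)
(* exterior algebra of the dual of a 6-dim real Lie algebra,
   written in the standard basis e^1..e^6 (indices 0..5 in Rocq). *)
From HB Require Import structures.
From mathcomp Require Import all_boot all_order all_algebra.
From mathcomp Require Import reals.
Set Implicit Arguments. Unset Strict Implicit. Unset Printing Implicit Defensive.
Import Order.TTheory GRing.Theory Num.Theory.
Local Open Scope ring_scope.

Section Forms.
Variable R : realType.

(* A form on g (element of Lambda of the dual of g) : coefficient of e^I for each subset I,
   where e^I = e^{i1} /\ ... /\ e^{ik} with i1 < ... < ik. *)
Local Notation cform := {ffun {set 'I_6} -> R}.

(* e^I /\ e^J = (-1)^(inv I J) e^(I u J) for disjoint I, J *)
Definition inv_cnt (I J : {set 'I_6}) : nat :=
  #|[set p : 'I_6 * 'I_6 | (p.1 \in I) && (p.2 \in J) && (p.2 < p.1)%N]|.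

Definition wedge (a b : cform) : cform :=
  [ffun K => \sum_(I : {set 'I_6}) \sum_(J : {set 'I_6} |
       [disjoint I & J] && (I :|: J == K))
       (-1) ^+ (inv_cnt I J) * a I * b J].

Definition sc (c : R) (a : cform) : cform := [ffun K => c * a K].

Definition basis (I : {set 'I_6}) : cform := [ffun K => (K == I)%:R].
Definition one_form : cform := basis set0.
Definition e (i : 'I_6) : cform := basis [set i].

(* A Lie algebra structure given by d on the basis of g^* *)
Definition structure := 'I_6 -> cform.

Definition dbasis (de : structure) (I : {set 'I_6}) : cform :=
  \sum_(i in I) sc ((-1) ^+ #|[set j in I | (j < i)%N]|) (wedge (de i) (basis (I :\ i))).
Definition d (de : structure) (a : cform) : cform :=
  \sum_(I : {set 'I_6}) sc (a I) (dbasis de I).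

Definition o (k : nat) : 'I_6 := inord k.
(* (0,0,12,13,14,34+52) *)
Definition g1 : structure := fun i =>
  match nat_of_ord i with
  | 2 => wedge (e (o 0)) (e (o 1))
  | 3 => wedge (e (o 0)) (e (o 2))
  | 4 => wedge (e (o 0)) (e (o 3))
  | 5 => wedge (e (o 2)) (e (o 3)) + wedge (e (o 4)) (e (o 1))
  | _ => 0
  end.
(* (0,0,12,13,14+23,34+52) *)
Definition g2 : structure := fun i =>
  match nat_of_ord i with
  | 2 => wedge (e (o 0)) (e (o 1))
  | 3 => wedge (e (o 0)) (e (o 2))
  | 4 => wedge (e (o 0)) (e (o 3)) + wedge (e (o 1)) (e (o 2))
  | 5 => wedge (e (o 2)) (e (o 3)) + wedge (e (o 4)) (e (o 1))
  | _ => 0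
  end.

(* A basis eta^1..eta^6 of g^* given by an invertible matrix P:
   eta^{k+1} = sum_j P k j e^{j+1} *)
Definition eta (P : 'M[R]_6) (k : 'I_6) : cform := \sum_j sc (P k j) (e j).
Definition etaw (P : 'M[R]_6) (I : {set 'I_6}) : cform :=
  foldr wedge one_form [seq eta P k | k <- enum I].

(* complex forms as pairs (real part, imaginary part) *)
Definition cwedge (a b : cform * cform) : cform * cform :=
  (wedge a.1 b.1 - wedge a.2 b.2, wedge a.1 b.2 + wedge a.2 b.1).

Definition SU3_structure (om psip : cform) : Prop :=
  exists P : 'M[R]_6, P \in unitmx /\
  exists psim : cform,
    om = wedge (eta P (o 0)) (eta P (o 1)) + wedge (eta P (o 2)) (eta P (o 3))
         + wedge (eta P (o 4)) (eta P (o 5)) /\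
    (psip, psim) = cwedge (cwedge (eta P (o 0), eta P (o 1))
                                  (eta P (o 2), eta P (o 3)))
                          (eta P (o 4), eta P (o 5)).

Definition half_flat (de : structure) (om psip : cform) : Prop :=
  SU3_structure om psip /\ wedge (d de om) om = 0 /\ d de psip = 0.

Definition has_half_flat (de : structure) : Prop :=
  exists om psip, half_flat de om psip.

(* Coherent splittings: g^* = V1 (+) V2 with V1 = span(eta^1,eta^2),
   V2 = span(eta^3..eta^6).  The bidegree of eta^I is
   (#(I n {1,2}), #(I n {3..6})). *)
Definition bideg (I : {set 'I_6}) : nat * nat :=
  (#|[set i in I | (i < 2)%N]|, #|[set i in I | (2 <= i)%N]|).

Definition in_span (P : 'M[R]_6) (S : {set 'I_6} -> bool) (a : cform) : Prop :=
  exists c : {set 'I_6} -> R, a = \sum_(J | S J) sc (c J) (etaw P J).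

Definition Lam (p q : nat) (J : {set 'I_6}) : bool := bideg J == (p, q).

Definition coherent_splitting (de : structure) (P : 'M[R]_6) : Prop :=
  P \in unitmx /\
  forall (p q : nat) (a : cform), in_span P (Lam p q) a ->
    in_span P (fun J => Lam p.+1 q J || ((bideg J).1 == p.+2) && ((bideg J).2.+1 == q))
      (d de a).

Definition has_coherent_splitting (de : structure) : Prop :=
  exists P, coherent_splitting de P.

End Forms.

(* Main.v *)
Require Import Defs.
From Stdlib Require Import PeanoNat.
From HB Require Import structures.
From mathcomp Require Import all_boot all_order all_algebra.
From mathcomp Require Import reals ring lra zify.
Set Implicit Arguments. Unset Strict Implicit. Unset Printing Implicit Defensive.
Import Order.TTheory GRing.Theory Num.Theory.
Local Open Scope ring_scope.


Definition sidx (n : nat) : {set 'I_6} := [set i : 'I_6 | Nat.testbit n i].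
Arguments sidx : simpl never.
Arguments o : simpl never.

Lemma in_sidx n (i : 'I_6) : (i \in sidx n) = Nat.testbit n i.
Proof. by rewrite inE. Qed.

Definition nfold (l : seq nat) (F : nat -> nat) : nat := foldr (fun m acc => F m + acc)%N 0%N l.
Lemma big_nfold l F : (\sum_(m <- l) F m)%N = nfold l F.
Proof. by elim: l => [|x l IH]; rewrite ?big_nil ?big_cons ?IH. Qed.
Lemma eq_nfold l F G : (forall m, m \in l -> F m = G m) -> nfold l F = nfold l G.
Proof.
elim: l => //= x l IH H; rewrite H ?mem_head // IH // => m hm.
by apply: H; rewrite in_cons hm orbT.
Qed.

Lemma oK i : (i < 6)%N -> nat_of_ord (o i) = i.
Proof. by move=> h; rewrite /o inordK. Qed.
Lemma o_val (i : 'I_6) : o i = i.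
Proof. by apply/val_inj; rewrite /= oK. Qed.

Lemma sum_ord6N (F : 'I_6 -> nat) : (\sum_(i : 'I_6) F i)%N = nfold (iota 0 6) (fun i => F (o i)).
Proof.
transitivity (\sum_(0 <= i < 6) F (o i))%N; last by rewrite big_nfold.
by rewrite big_mkord; apply: eq_bigr => i _; rewrite o_val.
Qed.

Definition cntn m i := nfold (iota 0 6) (fun j => (Nat.testbit m j && (j < i))%N).
Definition invn m n := nfold (iota 0 6) (fun i => nfold (iota 0 6) (fun j => (Nat.testbit m i && Nat.testbit n j && (j < i))%N)).

Lemma card_pred6 (P : 'I_6 -> bool) : #|[set j | P j]| = nfold (iota 0 6) (fun j => P (o j) : nat).
Proof.
rewrite -(sum_ord6N (fun j => P j : nat)) -sum1_card big_mkcond /=.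
by apply: eq_bigr => i _; rewrite inE; case: (P i).
Qed.

Lemma cntnE m (i : nat) : #|[set j in sidx m | (j < i)%N]| = cntn m i.
Proof.
rewrite (@card_pred6 (fun j => (j \in sidx m) && (j < i)%N)) /cntn.
by apply: eq_nfold => j; rewrite mem_iota => /andP[_ hj]; rewrite in_sidx oK.
Qed.

Lemma invnE m n : inv_cnt (sidx m) (sidx n) = invn m n.
Proof.
rewrite /inv_cnt -sum1_card big_mkcond /=.
set S := [set p | _].
rewrite (eq_bigr (fun p : 'I_6 * 'I_6 => if (p.1, p.2) \in S then 1%N else 0%N)); last by case.
rewrite -(pair_bigA _ (fun i j => if (i, j) \in S then 1%N else 0%N)) /=.
rewrite (sum_ord6N (fun i => \sum_j if (i, j) \in S then 1 else 0)%N) /invn.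
apply: eq_nfold => i; rewrite mem_iota => /andP[_ hi].
rewrite (sum_ord6N (fun j => if (o i, j) \in S then 1 else 0)%N). apply: eq_nfold => j; rewrite mem_iota => /andP[_ hj].
by rewrite /S inE /= !in_sidx !oK //; case: (_ && _).
Qed.

Definition subb m k := all (fun i => Nat.testbit m i ==> Nat.testbit k i) (iota 0 6).
Definition eqs m k := all (fun i => Nat.testbit m i == Nat.testbit k i) (iota 0 6).

Lemma subbE m k : (sidx m \subset sidx k) = subb m k.
Proof.
apply/subsetP/allP => H i.
- rewrite mem_iota => /andP[_ hi]; apply/implyP => hm.
  by have := H (o i); rewrite !in_sidx oK //; apply.
- by rewrite !in_sidx => hm; have := H i; rewrite mem_iota ltn_ord /= => /(_ isT)/implyP; apply.
Qed.

Lemma eqsE m k : (sidx m == sidx k) = eqs m k.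
Proof.
apply/eqP/allP => [/setP H i|H].
- by rewrite mem_iota => /andP[_ hi]; have := H (o i); rewrite !in_sidx oK // => ->.
- by apply/setP => i; rewrite !in_sidx; apply/eqP/H; rewrite mem_iota ltn_ord.
Qed.

Lemma diffE k m : sidx k :\: sidx m = sidx (Nat.ldiff k m).
Proof. by apply/setP => i; rewrite !inE Nat.ldiff_spec andbC. Qed.

Lemma eqbE (a b : nat) : Nat.eqb a b = (a == b).
Proof. by case: Nat.eqb_spec => [->|h]; [rewrite eqxx | apply/esym/eqP]. Qed.

Lemma clearE m (i : nat) : (i < 6)%N -> sidx m :\ o i = sidx (Nat.clearbit m i).
Proof.
move=> hi; apply/setP => j; rewrite !inE Nat.clearbit_eqb andbC eqbE; congr (_ && ~~ _).
by apply/eqP/eqP => [->|h]; [rewrite oK | apply/val_inj; rewrite /= oK].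
Qed.

Lemma set1E (i : nat) : (i < 6)%N -> [set o i] = sidx (Nat.pow 2 i).
Proof.
move=> hi; apply/setP => j; rewrite !inE Nat.pow2_bits_eqb eqbE.
by apply/eqP/eqP => [->|h]; [rewrite oK | apply/val_inj; rewrite /= oK].
Qed.

Section Engine.
Variable R : realType.
Local Notation cform := {ffun {set 'I_6} -> R}.

Definition sumL (l : seq nat) (F : nat -> R) : R := foldr (fun m acc => F m + acc) 0 l.
Lemma big_sumL l F : \sum_(m <- l) F m = sumL l F.
Proof. by elim: l => [|x l IH]; rewrite ?big_nil ?big_cons ?IH. Qed.
Lemma eq_sumL l F G : (forall m, m \in l -> F m = G m) -> sumL l F = sumL l G.
Proof.
elim: l => //= x l IH H; rewrite H ?mem_head // IH // => m hm.
by apply: H; rewrite in_cons hm orbT.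
Qed.

Lemma sum_ord6 (F : 'I_6 -> R) : \sum_(i : 'I_6) F i = sumL (iota 0 6) (fun i => F (o i)).
Proof.
transitivity (\sum_(0 <= i < 6) F (o i)); last by rewrite big_sumL.
by rewrite big_mkord; apply: eq_bigr => i _; rewrite o_val.
Qed.

Lemma sidx_inj : injective (fun m : 'I_64 => sidx m).
Proof.
move=> m n /setP H; apply/val_inj/Nat.bits_inj => i.
case: (ltnP i 6) => hi.
  by have := H (o i); rewrite !in_sidx oK.
have hb (k : 'I_64) : Nat.testbit k i = false.
  have hk : (k < Nat.pow 2 i)%coq_nat.
    have h6 : (Nat.pow 2 6 <= Nat.pow 2 i)%coq_nat.
      by apply: Nat.pow_le_mono_r; lia.
    have := ltn_ord k; move: h6 => /=; lia.
  have := Nat.testbit_spec' k i; rewrite Nat.div_small //.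
  by case: (Nat.testbit k i).
by rewrite !hb.
Qed.

Lemma card_sets : #|{set 'I_6}| = 64%N.
Proof. by rewrite -cardsT -powersetT card_powerset cardsT card_ord. Qed.

Lemma sum_sets (F : {set 'I_6} -> R) :
  \sum_(I : {set 'I_6}) F I = sumL (iota 0 64) (fun m => F (sidx m)).
Proof.
have bij : bijective (fun m : 'I_64 => sidx m).
  by apply: inj_card_bij sidx_inj _; rewrite card_sets card_ord.
rewrite (reindex _ (onW_bij _ bij)) /=.
transitivity (\sum_(0 <= i < 64) F (sidx i)); last by rewrite big_sumL.
by rewrite big_mkord.
Qed.

Definition sgnR (b : bool) : R := if b then -1 else 1.
Lemma sgnE n : (-1) ^+ n = sgnR (odd n).
Proof. by rewrite -signr_odd /sgnR; case: (odd n); rewrite ?expr1 ?expr0. Qed.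


Lemma setl1 (I J K : {set 'I_6}) : I \subset K ->
  ([disjoint I & J] && (I :|: J == K)) = (J == K :\: I).
Proof.
move=> hIK; apply/andP/eqP => [[dis /eqP <-]|->].
- by rewrite setDUl setDv set0U; apply/esym/setDidPl; rewrite disjoint_sym.
- split; first by rewrite -setI_eq0; apply/eqP/setP => x; rewrite !inE; case: (x \in I).
  apply/eqP/setP => x; rewrite !inE; case hx: (x \in I) => //=.
  by rewrite (subsetP hIK _ hx).
Qed.

Lemma setl2 (I J K : {set 'I_6}) : ~~ (I \subset K) ->
  ([disjoint I & J] && (I :|: J == K)) = false.
Proof.
move=> hIK; apply/andP => [[_ /eqP e]]; move/negP: hIK; apply.
by rewrite -e subsetUl.
Qed.

Lemma WK0 (a b : cform) K : (wedge a b) K =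
  \sum_(I : {set 'I_6}) (if I \subset K then (-1) ^+ inv_cnt I (K :\: I) * a I * b (K :\: I) else 0).
Proof.
rewrite ffunE; apply: eq_bigr => I _; case: ifP => h.
- by rewrite (big_pred1 (K :\: I)) // => J; apply: setl1.
- by rewrite big_pred0 // => J; apply: setl2; rewrite h.
Qed.

Lemma WK (a b : cform) k : (wedge a b) (sidx k) =
  sumL (iota 0 64) (fun m => if subb m k then
     sgnR (odd (invn m (Nat.ldiff k m))) * a (sidx m) * b (sidx (Nat.ldiff k m)) else 0).
Proof.
by rewrite WK0 sum_sets; apply: eq_sumL => m _; rewrite subbE diffE invnE sgnE.
Qed.

Lemma WBr (a : cform) J K : (wedge a (basis R J)) K =
  if J \subset K then (-1) ^+ inv_cnt (K :\: J) J * a (K :\: J) else 0.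
Proof.
rewrite WK0; case: ifP => hJ.
- have hKJ : K :\: (K :\: J) = J by rewrite setDDr setDv set0U; apply/setIidPr.
  rewrite (bigD1 (K :\: J)) //= subsetDl hKJ ffunE eqxx mulr1 big1 ?addr0 // => I hI.
  case: ifP => // hIK; rewrite ffunE.
  case: eqP => [e|]; last by rewrite mulr0.
  move/eqP: hI => hI; exfalso; apply: hI; rewrite -e setDDr setDv set0U; apply/esym/setIidPr => //.
- apply: big1 => I _; case: ifP => // hIK; rewrite ffunE.
  case: eqP => [e|]; last by rewrite mulr0.
  by move: hJ; rewrite -e subsetDl.
Qed.


Lemma scE c (a : cform) K : (sc c a) K = c * a K.
Proof. by rewrite ffunE. Qed.

Definition DB (de : structure R) m k := sumL (iota 0 6) (fun i =>
  if Nat.testbit m i then sgnR (odd (cntn m i)) *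
    (if subb (Nat.clearbit m i) k then
       sgnR (odd (invn (Nat.ldiff k (Nat.clearbit m i)) (Nat.clearbit m i))) *
       de (o i) (sidx (Nat.ldiff k (Nat.clearbit m i)))
     else 0)
  else 0).

Lemma dbasisE (de : structure R) m k : (dbasis de (sidx m)) (sidx k) = DB de m k.
Proof.
rewrite /dbasis sum_ffunE big_mkcond sum_ord6 /DB; apply: eq_sumL => i.
rewrite mem_iota => /andP[_ hi]; rewrite in_sidx oK //; case: ifP => // _.
by rewrite scE WBr clearE // subbE diffE invnE !sgnE cntnE.
Qed.

Lemma dE (de : structure R) (a : cform) k :
  (d de a) (sidx k) = sumL (iota 0 64) (fun m => a (sidx m) * DB de m k).
Proof.
by rewrite /d sum_ffunE sum_sets; apply: eq_sumL => m _; rewrite scE dbasisE.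
Qed.

Lemma wedge_ee a b n : (a < 6)%N -> (b < 6)%N ->
  (wedge (e R (o a)) (e R (o b))) (sidx n) =
  if subb (Nat.pow 2 b) n then
    sgnR (odd (invn (Nat.ldiff n (Nat.pow 2 b)) (Nat.pow 2 b))) *
    (eqs (Nat.ldiff n (Nat.pow 2 b)) (Nat.pow 2 a))%:R else 0.
Proof.
move=> ha hb; rewrite {2}/e set1E // WBr subbE diffE invnE sgnE.
by rewrite /e ffunE set1E // eqsE.
Qed.

Lemma g1_0 : g1 R (o 0) = 0. Proof. by rewrite /g1 oK. Qed.
Lemma g1_1 : g1 R (o 1) = 0. Proof. by rewrite /g1 oK. Qed.
Lemma g1_2 : g1 R (o 2) = wedge (e R (o 0)) (e R (o 1)). Proof. by rewrite /g1 oK. Qed.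
Lemma g1_3 : g1 R (o 3) = wedge (e R (o 0)) (e R (o 2)). Proof. by rewrite /g1 oK. Qed.
Lemma g1_4 : g1 R (o 4) = wedge (e R (o 0)) (e R (o 3)). Proof. by rewrite /g1 oK. Qed.
Lemma g1_5 : g1 R (o 5) = wedge (e R (o 2)) (e R (o 3)) + wedge (e R (o 4)) (e R (o 1)).
Proof. by rewrite /g1 oK. Qed.
Lemma g2_0 : g2 R (o 0) = 0. Proof. by rewrite /g2 oK. Qed.
Lemma g2_1 : g2 R (o 1) = 0. Proof. by rewrite /g2 oK. Qed.
Lemma g2_2 : g2 R (o 2) = wedge (e R (o 0)) (e R (o 1)). Proof. by rewrite /g2 oK. Qed.
Lemma g2_3 : g2 R (o 3) = wedge (e R (o 0)) (e R (o 2)). Proof. by rewrite /g2 oK. Qed.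
Lemma g2_4 : g2 R (o 4) = wedge (e R (o 0)) (e R (o 3)) + wedge (e R (o 1)) (e R (o 2)).
Proof. by rewrite /g2 oK. Qed.
Lemma g2_5 : g2 R (o 5) = wedge (e R (o 2)) (e R (o 3)) + wedge (e R (o 4)) (e R (o 1)).
Proof. by rewrite /g2 oK. Qed.

Lemma ffun0E K : (0 : cform) K = 0. Proof. by rewrite ffunE. Qed.
Lemma ffunDE (f g : cform) K : (f + g) K = f K + g K. Proof. by rewrite ffunE. Qed.
Lemma ffunBE (f g : cform) K : (f - g) K = f K - g K. Proof. by rewrite !ffunE. Qed.


Lemma sgnX b c : sgnR (b (+) c) = sgnR b * sgnR c.
Proof. by case: b; case: c; rewrite /sgnR /= ?mulN1r ?mulr1 ?mul1r ?opprK. Qed.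

Definition wl k : seq ((nat * nat) * bool) :=
  [seq ((m, Nat.ldiff k m), odd (invn m (Nat.ldiff k m))) | m <- [seq m <- iota 0 64 | subb m k]].

Lemma WKL (a b : cform) k : (wedge a b) (sidx k) =
  \sum_(t <- wl k) sgnR t.2 * a (sidx t.1.1) * b (sidx t.1.2).
Proof. by rewrite WK -big_sumL big_map big_filter [RHS]big_mkcond. Qed.

Definition dl k : seq (nat * nat * nat * bool) :=
  [seq (m, i, Nat.ldiff k (Nat.clearbit m i),
        odd (cntn m i) (+) odd (invn (Nat.ldiff k (Nat.clearbit m i)) (Nat.clearbit m i)))
  | m <- iota 0 64, i <- [seq i <- iota 0 6 | Nat.testbit m i && subb (Nat.clearbit m i) k]].

Definition rl (gl : nat -> nat -> seq bool) k : seq (nat * bool) :=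
  [seq (t.1.1.1, t.2 (+) b) | t <- dl k, b <- gl t.1.1.2 t.1.2].

Lemma dL (de : structure R) gl (Hde : forall i n, de (o i) (sidx n) = \sum_(b <- gl i n) sgnR b)
  (a : cform) k : (d de a) (sidx k) = \sum_(t <- rl gl k) sgnR t.2 * a (sidx t.1).
Proof.
rewrite dE /rl big_allpairs_dep /dl big_allpairs_dep -big_sumL; apply: eq_bigr => m _.
rewrite big_filter big_mkcond /DB -big_sumL mulr_sumr; apply: eq_bigr => i _ /=.
case: (Nat.testbit m i); last by rewrite mulr0.
case: (subb _ k) => /=; last by rewrite !mulr0.
rewrite Hde !mulr_sumr; apply: eq_bigr => b _.
by rewrite !sgnX; ring.
Qed.

Definition eel a b n : seq bool :=
  if subb (Nat.pow 2 b) n && eqs (Nat.ldiff n (Nat.pow 2 b)) (Nat.pow 2 a)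
  then [:: odd (invn (Nat.ldiff n (Nat.pow 2 b)) (Nat.pow 2 b))] else [::].

Lemma eeL a b n : (a < 6)%N -> (b < 6)%N ->
  (wedge (e R (o a)) (e R (o b))) (sidx n) = \sum_(s <- eel a b n) sgnR s.
Proof.
move=> ha hb; rewrite wedge_ee // /eel.
case: (subb _ n) => /=; last by rewrite big_nil.
by case: (eqs _ _); rewrite /= ?big_cons ?big_nil ?mulr1 ?mulr0 ?addr0.
Qed.

Definition gl1 i n : seq bool :=
  match i with 2 => eel 0 1 n | 3 => eel 0 2 n | 4 => eel 0 3 n
  | 5 => eel 2 3 n ++ eel 4 1 n | _ => [::] end.
Definition gl2 i n : seq bool :=
  match i with 2 => eel 0 1 n | 3 => eel 0 2 n | 4 => eel 0 3 n ++ eel 1 2 n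
  | 5 => eel 2 3 n ++ eel 4 1 n | _ => [::] end.

Lemma o_big i : (6 <= i)%N -> o i = o 0.
Proof.
move=> h; apply/val_inj => /=.
have -> : nat_of_ord (o 0) = 0 by rewrite oK.
by rewrite /o /inord /insubd insubN // -leqNgt.
Qed.

Lemma g1L i n : g1 R (o i) (sidx n) = \sum_(b <- gl1 i n) sgnR b.
Proof.
case: (ltnP i 6) => hi; last by rewrite o_big // g1_0 ffun0E; case: i hi => [|[|[|[|[|[|i]]]]]] //= _; rewrite big_nil.
case: i hi => [|[|[|[|[|[|]]]]]] // _.
- by rewrite g1_0 ffun0E big_nil.
- by rewrite g1_1 ffun0E big_nil.
- by rewrite g1_2 eeL.
- by rewrite g1_3 eeL.
- by rewrite g1_4 eeL.
- by rewrite g1_5 ffunDE !eeL // big_cat.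
Qed.

Lemma g2L i n : g2 R (o i) (sidx n) = \sum_(b <- gl2 i n) sgnR b.
Proof.
case: (ltnP i 6) => hi; last by rewrite o_big // g2_0 ffun0E; case: i hi => [|[|[|[|[|[|i]]]]]] //= _; rewrite big_nil.
case: i hi => [|[|[|[|[|[|]]]]]] // _.
- by rewrite g2_0 ffun0E big_nil.
- by rewrite g2_1 ffun0E big_nil.
- by rewrite g2_2 eeL.
- by rewrite g2_3 eeL.
- by rewrite g2_4 ffunDE !eeL // big_cat.
- by rewrite g2_5 ffunDE !eeL // big_cat.
Qed.

Definition el n := [seq j <- iota 0 6 | eqs n (Nat.pow 2 j)].

Lemma etaL (P : 'M[R]_6) k n : (Defs.eta P k) (sidx n) = \sum_(j <- el n) P k (o j).
Proof.
rewrite /Defs.eta sum_ffunE sum_ord6 -big_sumL /el big_filter [RHS]big_mkcond.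
apply: eq_big_seq => j; rewrite mem_iota => /andP[_ hj].
by rewrite scE /e ffunE set1E // eqsE; case: (eqs _ _); rewrite ?mulr1 ?mulr0.
Qed.


Definition sumW {T : Type} (l : seq T) (F : T -> R) : R := foldr (fun t acc => F t + acc) 0 l.
Lemma big_sumW {T : Type} (l : seq T) F : \sum_(t <- l) F t = sumW l F.
Proof. by elim: l => [|x l IH]; rewrite ?big_nil ?big_cons ?IH. Qed.

Lemma WKW (a b : cform) k : (wedge a b) (sidx k) =
  sumW (wl k) (fun t => sgnR t.2 * a (sidx t.1.1) * b (sidx t.1.2)).
Proof. by rewrite WKL big_sumW. Qed.

Lemma etaW (P : 'M[R]_6) k n : (Defs.eta P k) (sidx n) = sumW (el n) (fun j => P k (o j)).
Proof. by rewrite etaL big_sumW. Qed.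

Lemma dW (de : structure R) gl (Hde : forall i n, de (o i) (sidx n) = \sum_(b <- gl i n) sgnR b)
  (a : cform) k : (d de a) (sidx k) = sumW (rl gl k) (fun t => sgnR t.2 * a (sidx t.1)).
Proof. by rewrite (dL Hde) big_sumW. Qed.

Lemma gW1 i n : g1 R (o i) (sidx n) = sumW (gl1 i n) sgnR.
Proof. by rewrite g1L big_sumW. Qed.
Lemma gW2 i n : g2 R (o i) (sidx n) = sumW (gl2 i n) sgnR.
Proof. by rewrite g2L big_sumW. Qed.

End Engine.

Arguments g1 : simpl never.
Arguments g2 : simpl never.
Arguments wedge : simpl never.
Arguments d : simpl never.
Arguments e : simpl never.
Arguments sgnR : simpl nomatch.





Inductive pe := PV of nat & nat | PF of nat | PAdd of pe & pe | PMul of pe & pe | PNeg of pe | P0 | P1.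

Definition sadd x y := match x, y with P0, _ => y | _, P0 => x | _, _ => PAdd x y end.
Definition smul x y := match x, y with P0, _ => P0 | _, P0 => P0 | P1, _ => y | _, P1 => x | _, _ => PMul x y end.
Definition sneg x := match x with P0 => P0 | PNeg y => y | _ => PNeg x end.
Definition ssg (b : bool) x := if b then sneg x else x.
Definition sumS {T : Type} (l : seq T) (F : T -> pe) : pe := foldr (fun t acc => sadd (F t) acc) P0 l.

Definition wedgeS (f g : nat -> pe) k := sumS (wl k) (fun t => ssg t.2 (smul (f t.1.1) (g t.1.2))).
Definition etaS (r : nat) (n : nat) := sumS (el n) (fun j => PV r j).
Definition addS (f g : nat -> pe) n := sadd (f n) (g n).
Definition subS (f g : nat -> pe) n := sadd (f n) (sneg (g n)).
Definition dS (gl : nat -> nat -> seq bool) (f : nat -> pe) k := sumS (rl gl k) (fun t => ssg t.2 (f t.1)).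
Definition formS (n : nat) := PF n.
Definition gS (gl : nat -> nat -> seq bool) (i : nat) (n : nat) := sumS (gl i n) (fun s => ssg s P1).

Section Interp.
Variable R : realType.
Local Notation cform := {ffun {set 'I_6} -> R}.
Variables (P : 'M[R]_6) (a : cform).

Fixpoint interp (x : pe) : R := match x with
 | PV i j => P (o i) (o j) | PF m => a (sidx m)
 | PAdd x y => interp x + interp y | PMul x y => interp x * interp y
 | PNeg x => - interp x | P0 => 0 | P1 => 1 end.

Lemma saddE x y : interp (sadd x y) = interp x + interp y.
Proof. by case: x; case: y => * //=; rewrite ?addr0 ?add0r. Qed.
Lemma smulE x y : interp (smul x y) = interp x * interp y.
Proof. by case: x; case: y => * //=; rewrite ?mulr0 ?mul0r ?mulr1 ?mul1r. Qed.
Lemma snegE x : interp (sneg x) = - interp x.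
Proof. by case: x => * //=; rewrite ?opprK ?oppr0. Qed.
Lemma ssgE b x : interp (ssg b x) = sgnR R b * interp x.
Proof. by case: b; rewrite /= ?snegE /sgnR ?mulN1r ?mul1r. Qed.
Lemma sumSE {T : Type} (l : seq T) F : interp (sumS l F) = sumW l (fun t => interp (F t)).
Proof. by elim: l => //= t l IH; rewrite saddE IH. Qed.

Definition rep (f : nat -> pe) (b : cform) := forall m, interp (f m) = b (sidx m).

Lemma eq_sumW {T : Type} (l : seq T) (F G : T -> R) : (forall t, F t = G t) -> sumW l F = sumW l G.
Proof. by move=> h; elim: l => //= t l ->; rewrite h. Qed.

Lemma wedgeS_ok f g b c : rep f b -> rep g c -> rep (wedgeS f g) (wedge b c).
Proof.
move=> hf hg k; rewrite WKW /wedgeS sumSE; apply: eq_sumW => t.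
by rewrite ssgE smulE hf hg mulrA.
Qed.

Lemma etaS_ok r : rep (etaS r) (Defs.eta P (o r)).
Proof. by move=> n; rewrite etaW /etaS sumSE. Qed.

Lemma addS_ok f g b c : rep f b -> rep g c -> rep (addS f g) (b + c).
Proof. by move=> hf hg n; rewrite /addS saddE hf hg ffunDE. Qed.
Lemma subS_ok f g b c : rep f b -> rep g c -> rep (subS f g) (b - c).
Proof. by move=> hf hg n; rewrite /subS saddE snegE hf hg ffunBE. Qed.
Lemma formS_ok : rep formS a.
Proof. by []. Qed.
Lemma dS_ok (de : structure R) gl (Hde : forall i n, de (o i) (sidx n) = \sum_(b <- gl i n) sgnR R b)
  f b : rep f b -> rep (dS gl f) (d de b).
Proof.
move=> hf k; rewrite (dW Hde) /dS sumSE; apply: eq_sumW => t.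
by rewrite ssgE hf.
Qed.
Lemma gS1_ok i : rep (gS gl1 i) (g1 R (o i)).
Proof. by move=> n; rewrite gW1 /gS sumSE; apply: eq_sumW => s; rewrite ssgE /= mulr1. Qed.
Lemma gS2_ok i : rep (gS gl2 i) (g2 R (o i)).
Proof. by move=> n; rewrite gW2 /gS sumSE; apply: eq_sumW => s; rewrite ssgE /= mulr1. Qed.

End Interp.

Ltac vmcomp t := let v := eval vm_compute in t in rewrite (_ : t = v); [|vm_compute; reflexivity].


Section Lin.
Variable R : realType.

Lemma sum6 (F : 'I_6 -> R) : \sum_(i < 6) F i = F (o 0) + F (o 1) + F (o 2) + F (o 3) + F (o 4) + F (o 5).
Proof. by rewrite sum_ord6 /= addr0 !addrA. Qed.

Lemma colK6 (P : 'M[R]_6) (Pu : P \in unitmx) (v0 v1 v2 v3 v4 v5 : R) :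
 (forall i, (i < 6)%N -> P (o i) (o 0) * v0 + P (o i) (o 1) * v1 + P (o i) (o 2) * v2
     + P (o i) (o 3) * v3 + P (o i) (o 4) * v4 + P (o i) (o 5) * v5 = 0) ->
 v0 = 0 /\ v1 = 0 /\ v2 = 0 /\ v3 = 0 /\ v4 = 0 /\ v5 = 0.
Proof.
move=> H.
pose V : 'cV[R]_6 := \col_j nth 0 [:: v0; v1; v2; v3; v4; v5] j.
have HV : P *m V = 0.
  apply/matrixP => i j; rewrite !mxE sum6 !mxE !oK //= -(o_val i).
  by rewrite H.
have V0 : V = 0 by rewrite -(mulKmx Pu V) HV mulmx0.
have e k : (k < 6)%N -> nth 0 [:: v0; v1; v2; v3; v4; v5] k = 0.
  by move=> hk; have := congr1 (fun M : 'cV[R]_6 => M (o k) 0) V0; rewrite !mxE oK.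
by do !split; [apply: (e 0%N) | apply: (e 1%N) | apply: (e 2%N) | apply: (e 3%N) | apply: (e 4%N) | apply: (e 5%N)].
Qed.

Lemma rowK6 (P : 'M[R]_6) (Pu : P \in unitmx) (r0 r1 r2 r3 r4 r5 : R) :
 (forall j, (j < 6)%N -> r0 * P (o 0) (o j) + r1 * P (o 1) (o j) + r2 * P (o 2) (o j)
     + r3 * P (o 3) (o j) + r4 * P (o 4) (o j) + r5 * P (o 5) (o j) = 0) ->
 r0 = 0 /\ r1 = 0 /\ r2 = 0 /\ r3 = 0 /\ r4 = 0 /\ r5 = 0.
Proof.
move=> H.
pose V : 'rV[R]_6 := \row_j nth 0 [:: r0; r1; r2; r3; r4; r5] j.
have HV : V *m P = 0.
  apply/matrixP => i j; rewrite !mxE sum6 !mxE !oK //= -(o_val j).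
  by rewrite H.
have V0 : V = 0 by rewrite -(mulmxK Pu V) HV mul0mx.
have e k : (k < 6)%N -> nth 0 [:: r0; r1; r2; r3; r4; r5] k = 0.
  by move=> hk; have := congr1 (fun M : 'rV[R]_6 => M 0 (o k)) V0; rewrite !mxE oK.
by do !split; [apply: (e 0%N) | apply: (e 1%N) | apply: (e 2%N) | apply: (e 3%N) | apply: (e 4%N) | apply: (e 5%N)].
Qed.

End Lin.



Definition rre k := match k with 0 => 0 | 1 => 2 | _ => 4 end%N.
Definition rim k := match k with 0 => 1 | 1 => 3 | _ => 5 end%N.
Definition k1 k := match k with 0 => 1 | 1 => 2 | _ => 0 end%N.
Definition k2 k := match k with 0 => 2 | 1 => 0 | _ => 1 end%N.

Section HFAlg.
Variable R : realType.
Variable P : 'M[R]_6.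

Definition X k j := P (o (rre k)) (o j).
Definition Y k j := P (o (rim k)) (o j).
Definition col b : nat -> R := fun r => P (o r) (o b).
Definition cRw a (w : nat -> R) k :=
  (X (k1 k) a * w (rre (k2 k)) - Y (k1 k) a * w (rim (k2 k))) -
  (X (k2 k) a * w (rre (k1 k)) - Y (k2 k) a * w (rim (k1 k))).
Definition cIw a (w : nat -> R) k :=
  (X (k1 k) a * w (rim (k2 k)) + Y (k1 k) a * w (rre (k2 k))) -
  (X (k2 k) a * w (rim (k1 k)) + Y (k2 k) a * w (rre (k1 k))).
Definition crossR a b k := cRw a (col b) k.
Definition crossI a b k := cIw a (col b) k.
Definition detR a b c := X 0 a * crossR b c 0 - Y 0 a * crossI b c 0
  + (X 1 a * crossR b c 1 - Y 1 a * crossI b c 1) + (X 2 a * crossR b c 2 - Y 2 a * crossI b c 2).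
Definition om a b := X 0 a * Y 0 b - Y 0 a * X 0 b + (X 1 a * Y 1 b - Y 1 a * X 1 b)
  + (X 2 a * Y 2 b - Y 2 a * X 2 b).
Definition W a := om a 3 * om 4 5 - om a 4 * om 3 5 + om a 5 * om 3 4.
Definition nrm a := X 0 a * X 0 a + Y 0 a * Y 0 a + (X 1 a * X 1 a + Y 1 a * Y 1 a)
  + (X 2 a * X 2 a + Y 2 a * Y 2 a).
Definition hre a (w : nat -> R) := X 0 a * w 0%N + Y 0 a * w 1%N + (X 1 a * w 2%N + Y 1 a * w 3%N)
  + (X 2 a * w 4%N + Y 2 a * w 5%N).
Definition him a (w : nat -> R) := X 0 a * w 1%N - Y 0 a * w 0%N + (X 1 a * w 3%N - Y 1 a * w 2%N)
  + (X 2 a * w 5%N - Y 2 a * w 4%N).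
Definition RelR a w k := nrm a * w (rre k) - (hre a w * X k a - him a w * Y k a).
Definition RelI a w k := nrm a * w (rim k) - (hre a w * Y k a + him a w * X k a).

Ltac unf := rewrite /RelR /RelI /W /detR /crossR /crossI /cRw /cIw /col /om /nrm /hre /him /X /Y /=.

Lemma rel_lemma a w : (forall k, cRw a w k = 0) -> (forall k, cIw a w k = 0) ->
  forall k, (k < 3)%N -> RelR a w k = 0 /\ RelI a w k = 0.
Proof.
move=> hr hi k; case: k => [|[|[|k]]] // _; split.
- have e : RelR a w 0 = -(X 1 a * cRw a w 2 + Y 1 a * cIw a w 2) + (X 2 a * cRw a w 1 + Y 2 a * cIw a w 1) by unf; ring.
  by rewrite e !hr !hi; ring.
- have e : RelI a w 0 = -(X 1 a * cIw a w 2 - Y 1 a * cRw a w 2) + (X 2 a * cIw a w 1 - Y 2 a * cRw a w 1) by unf; ring.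
  by rewrite e !hr !hi; ring.
- have e : RelR a w 1 = (X 0 a * cRw a w 2 + Y 0 a * cIw a w 2) - (X 2 a * cRw a w 0 + Y 2 a * cIw a w 0) by unf; ring.
  by rewrite e !hr !hi; ring.
- have e : RelI a w 1 = (X 0 a * cIw a w 2 - Y 0 a * cRw a w 2) - (X 2 a * cIw a w 0 - Y 2 a * cRw a w 0) by unf; ring.
  by rewrite e !hr !hi; ring.
- have e : RelR a w 2 = -(X 0 a * cRw a w 1 + Y 0 a * cIw a w 1) + (X 1 a * cRw a w 0 + Y 1 a * cIw a w 0) by unf; ring.
  by rewrite e !hr !hi; ring.
- have e : RelI a w 2 = -(X 0 a * cIw a w 1 - Y 0 a * cRw a w 1) + (X 1 a * cIw a w 0 - Y 1 a * cRw a w 0) by unf; ring.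
  by rewrite e !hr !hi; ring.
Qed.


Definition om4w (w : nat -> R) := X 0 4 * w 1%N - Y 0 4 * w 0%N + (X 1 4 * w 3%N - Y 1 4 * w 2%N)
  + (X 2 4 * w 5%N - Y 2 4 * w 4%N).
Definition om3w (w : nat -> R) := X 0 3 * w 1%N - Y 0 3 * w 0%N + (X 1 3 * w 3%N - Y 1 3 * w 2%N)
  + (X 2 3 * w 5%N - Y 2 3 * w 4%N).
Definition FrW w k := Y k 3 * om4w w - Y k 4 * om3w w + w (rim k) * om 3 4.
Definition FiW w k := - (X k 3 * om4w w - X k 4 * om3w w + w (rre k) * om 3 4).
Definition FtW w := - Y 0 3 * FrW w 0 + X 0 3 * FiW w 0 + (- Y 1 3 * FrW w 1 + X 1 3 * FiW w 1)
  + (- Y 2 3 * FrW w 2 + X 2 3 * FiW w 2).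
Definition Fr k := FrW (col 5) k.
Definition Fi k := FiW (col 5) k.
Definition Gr k := crossR 3 5 k.
Definition Gi k := - crossI 3 5 k.
Definition Ft := - Y 0 3 * Fr 0 + X 0 3 * Fi 0 + (- Y 1 3 * Fr 1 + X 1 3 * Fi 1)
  + (- Y 2 3 * Fr 2 + X 2 3 * Fi 2).
Definition Gt := - Y 0 3 * Gr 0 + X 0 3 * Gi 0 + (- Y 1 3 * Gr 1 + X 1 3 * Gi 1)
  + (- Y 2 3 * Gr 2 + X 2 3 * Gi 2).
Definition S2 := crossR 3 4 0 * crossR 3 4 0 + crossI 3 4 0 * crossI 3 4 0
  + (crossR 3 4 1 * crossR 3 4 1 + crossI 3 4 1 * crossI 3 4 1)
  + (crossR 3 4 2 * crossR 3 4 2 + crossI 3 4 2 * crossI 3 4 2).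
Definition relv (b : nat) (r : nat) := match r with
  | 0 => RelR 4 (col b) 0 | 1 => RelI 4 (col b) 0 | 2 => RelR 4 (col b) 1
  | 3 => RelI 4 (col b) 1 | 4 => RelR 4 (col b) 2 | _ => RelI 4 (col b) 2 end%N.

Ltac unf2 := rewrite /Ft /Gt /S2 /Fr /Fi /Gr /Gi /FtW /FrW /FiW /om4w /om3w /relv; unf.

Lemma sos6 (a b c d e f : R) : a * a + b * b + (c * c + d * d) + (e * e + f * f) = 0 ->
  a = 0 /\ b = 0 /\ c = 0 /\ d = 0 /\ e = 0 /\ f = 0.
Proof.
move=> h.
have ha : 0 <= a * a by rewrite -expr2 sqr_ge0.
have hb : 0 <= b * b by rewrite -expr2 sqr_ge0.
have hc : 0 <= c * c by rewrite -expr2 sqr_ge0.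
have hd : 0 <= d * d by rewrite -expr2 sqr_ge0.
have he : 0 <= e * e by rewrite -expr2 sqr_ge0.
have hf : 0 <= f * f by rewrite -expr2 sqr_ge0.
have z x : 0 <= x * x -> x * x <= 0 -> x = 0.
  move=> h1 h2; have /eqP : x * x = 0 by apply/eqP; rewrite eq_le h2 h1.
  by rewrite mulf_eq0 orbb => /eqP.
by do !split; apply: z => //; lra.
Qed.

Lemma hf_alg (Pu : P \in unitmx)
  (h0 : detR 0 4 5 = 0) (h1 : detR 1 4 5 = 0) (h2 : detR 2 4 5 = 0) (h3 : detR 3 4 5 = 0)
  (h135 : detR 1 3 5 = 0) (h235 : detR 2 3 5 = 0) (hW1 : W 1 = 0) (hW2 : W 2 = 0) : False.
Proof.
have [c0r [c0i [c1r [c1i [c2r c2i]]]]] : crossR 4 5 0 = 0 /\ - crossI 4 5 0 = 0 /\ crossR 4 5 1 = 0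
   /\ - crossI 4 5 1 = 0 /\ crossR 4 5 2 = 0 /\ - crossI 4 5 2 = 0.
  apply: (rowK6 Pu) => j; case: j => [|[|[|[|[|[|j]]]]]] // _.
  - by apply: (eq_trans _ h0); unf; ring.
  - by apply: (eq_trans _ h1); unf; ring.
  - by apply: (eq_trans _ h2); unf; ring.
  - by apply: (eq_trans _ h3); unf; ring.
  - by unf; ring.
  - by unf; ring.
move/eqP: c0i; rewrite oppr_eq0 => /eqP c0i.
move/eqP: c1i; rewrite oppr_eq0 => /eqP c1i.
move/eqP: c2i; rewrite oppr_eq0 => /eqP c2i.
have hR k : cRw 4 (col 5) k = 0 by case: k => [|[|[|k]]].
have hI k : cIw 4 (col 5) k = 0 by case: k => [|[|[|k]]].
have rel5 := rel_lemma hR hI.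
have [r0 i0] := rel5 0%N isT.
have [r1 i1] := rel5 1%N isT.
have [r2 i2] := rel5 2%N isT.
have N0 : nrm 4 != 0.
  apply/eqP => hN.
  have [x0 [y0 [x1 [y1 [x2 y2]]]]] := sos6 hN.
  have := @colK6 _ P Pu 0 0 0 0 1 0.
  case.
    move=> i; case: i => [|[|[|[|[|[|i]]]]]] // _; rewrite !mulr0 !add0r mulr1 addr0.
    - exact: x0.
    - exact: y0.
    - exact: x1.
    - exact: y1.
    - exact: x2.
    - exact: y2.
  by move=> _ [_ [_ [_ [/eqP]]]]; rewrite oner_eq0.
have B0 : him 4 (col 5) != 0.
  apply/eqP => hB.
  have := @colK6 _ P Pu 0 0 0 0 (- hre 4 (col 5)) (nrm 4).
  case.
    move=> i; case: i => [|[|[|[|[|[|i]]]]]] // _.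
    - by apply: (eq_trans _ r0); rewrite /RelR hB /col /X /Y /=; ring.
    - by apply: (eq_trans _ i0); rewrite /RelI hB /col /X /Y /=; ring.
    - by apply: (eq_trans _ r1); rewrite /RelR hB /col /X /Y /=; ring.
    - by apply: (eq_trans _ i1); rewrite /RelI hB /col /X /Y /=; ring.
    - by apply: (eq_trans _ r2); rewrite /RelR hB /col /X /Y /=; ring.
    - by apply: (eq_trans _ i2); rewrite /RelI hB /col /X /Y /=; ring.
  by move=> _ [_ [_ [_ [_ /eqP]]]]; rewrite (negbTE N0).
have hFP j : Fr 0 * P (o 0) (o j) + Fi 0 * P (o 1) (o j) + Fr 1 * P (o 2) (o j)
   + Fi 1 * P (o 3) (o j) + Fr 2 * P (o 4) (o j) + Fi 2 * P (o 5) (o j) = W j.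
  by unf2; ring.
have hGP j : Gr 0 * P (o 0) (o j) + Gi 0 * P (o 1) (o j) + Gr 1 * P (o 2) (o j)
   + Gi 1 * P (o 3) (o j) + Gr 2 * P (o 4) (o j) + Gi 2 * P (o 5) (o j) = detR j 3 5.
  by unf2; ring.
have hC4 : detR 4 3 5 = 0.
  have -> : detR 4 3 5 = - (X 0 3 * crossR 4 5 0 - Y 0 3 * crossI 4 5 0
     + (X 1 3 * crossR 4 5 1 - Y 1 3 * crossI 4 5 1) + (X 2 3 * crossR 4 5 2 - Y 2 3 * crossI 4 5 2)).
    by unf; ring.
  by rewrite c0r c0i c1r c1i c2r c2i; ring.
have W3 : W 3 = 0 by unf; ring.
have W4 : W 4 = 0 by unf; ring.
have W5 : W 5 = 0 by unf; ring.
have D3 : detR 3 3 5 = 0 by unf; ring.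
have D5 : detR 5 3 5 = 0 by unf; ring.
set g := detR 0 3 5.
set dl := W 0.
have [n0 [n1 [n2 [n3 [n4 n5]]]]] : g * Fr 0 - dl * Gr 0 = 0 /\ g * Fi 0 - dl * Gi 0 = 0 /\
   g * Fr 1 - dl * Gr 1 = 0 /\ g * Fi 1 - dl * Gi 1 = 0 /\ g * Fr 2 - dl * Gr 2 = 0 /\ g * Fi 2 - dl * Gi 2 = 0.
  apply: (rowK6 Pu) => j hj.
  apply: (eq_trans (_ : _ = g * W j - dl * detR j 3 5)).
    by rewrite -hFP -hGP; ring.
  case: j hj => [|[|[|[|[|[|j]]]]]] // _.
  - by rewrite /g /dl; ring.
  - by rewrite hW1 h135; ring.
  - by rewrite hW2 h235; ring.
  - by rewrite W3 D3; ring.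
  - by rewrite W4 hC4; ring.
  - by rewrite W5 D5; ring.
have Gt0 : Gt = 0 by unf2; ring.
have gFt : g * Ft = 0.
  have -> : g * Ft = - Y 0 3 * (g * Fr 0 - dl * Gr 0) + X 0 3 * (g * Fi 0 - dl * Gi 0)
     + (- Y 1 3 * (g * Fr 1 - dl * Gr 1) + X 1 3 * (g * Fi 1 - dl * Gi 1))
     + (- Y 2 3 * (g * Fr 2 - dl * Gr 2) + X 2 3 * (g * Fi 2 - dl * Gi 2)) + dl * Gt.
    by rewrite /Ft /Gt; ring.
  by rewrite n0 n1 n2 n3 n4 n5 Gt0; ring.
have FtW0 : FtW (relv 5) = 0.
  by rewrite /FtW /FrW /FiW /om4w /om3w /= ?r0 ?i0 ?r1 ?i1 ?r2 ?i2; ring.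
have eN : nrm 4 * Ft + him 4 (col 5) * S2 = FtW (relv 5) by unf2; ring.
have gS2 : g * S2 = 0.
  have : g * him 4 (col 5) * S2 = 0.
    have -> : g * him 4 (col 5) * S2 = g * (nrm 4 * Ft + him 4 (col 5) * S2) - nrm 4 * (g * Ft) by ring.
    by rewrite eN FtW0 gFt; ring.
  by rewrite mulrAC => /eqP; rewrite mulf_eq0 (negbTE B0) orbF => /eqP.
have S20 : S2 = 0.
  case: (eqVneq g 0) => hg; last first.
    by move/eqP: gS2; rewrite mulf_eq0 (negbTE hg) => /eqP.
  have [d0r [d0i [d1r [d1i [d2r d2i]]]]] : Gr 0 = 0 /\ Gi 0 = 0 /\ Gr 1 = 0 /\ Gi 1 = 0 /\ Gr 2 = 0 /\ Gi 2 = 0.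
    apply: (rowK6 Pu) => j hj; rewrite hGP.
    case: j hj => [|[|[|[|[|[|j]]]]]] // _.
  rewrite /Gr /Gi in d0r d0i d1r d1i d2r d2i.
  move/eqP: d0i; rewrite oppr_eq0 => /eqP d0i.
  move/eqP: d1i; rewrite oppr_eq0 => /eqP d1i.
  move/eqP: d2i; rewrite oppr_eq0 => /eqP d2i.
  have cw0 : cRw 3 (relv 5) 0 = 0 by rewrite /cRw /= ?r0 ?i0 ?r1 ?i1 ?r2 ?i2; ring.
  have cw1 : cRw 3 (relv 5) 1 = 0 by rewrite /cRw /= ?r0 ?i0 ?r1 ?i1 ?r2 ?i2; ring.
  have cw2 : cRw 3 (relv 5) 2 = 0 by rewrite /cRw /= ?r0 ?i0 ?r1 ?i1 ?r2 ?i2; ring.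
  have ci0 : cIw 3 (relv 5) 0 = 0 by rewrite /cIw /= ?r0 ?i0 ?r1 ?i1 ?r2 ?i2; ring.
  have ci1 : cIw 3 (relv 5) 1 = 0 by rewrite /cIw /= ?r0 ?i0 ?r1 ?i1 ?r2 ?i2; ring.
  have ci2 : cIw 3 (relv 5) 2 = 0 by rewrite /cIw /= ?r0 ?i0 ?r1 ?i1 ?r2 ?i2; ring.
  set a := hre 4 (col 5); set b := him 4 (col 5).
  have e0 : a * crossR 3 4 0 - b * crossI 3 4 0 = 0.
    have -> : a * crossR 3 4 0 - b * crossI 3 4 0 = nrm 4 * crossR 3 5 0 - cRw 3 (relv 5) 0.
      by rewrite /a /b; unf2; ring.
    by rewrite d0r cw0; ring.
  have f0 : a * crossI 3 4 0 + b * crossR 3 4 0 = 0.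
    have -> : a * crossI 3 4 0 + b * crossR 3 4 0 = nrm 4 * crossI 3 5 0 - cIw 3 (relv 5) 0.
      by rewrite /a /b; unf2; ring.
    by rewrite d0i ci0; ring.
  have e1 : a * crossR 3 4 1 - b * crossI 3 4 1 = 0.
    have -> : a * crossR 3 4 1 - b * crossI 3 4 1 = nrm 4 * crossR 3 5 1 - cRw 3 (relv 5) 1.
      by rewrite /a /b; unf2; ring.
    by rewrite d1r cw1; ring.
  have f1 : a * crossI 3 4 1 + b * crossR 3 4 1 = 0.
    have -> : a * crossI 3 4 1 + b * crossR 3 4 1 = nrm 4 * crossI 3 5 1 - cIw 3 (relv 5) 1.
      by rewrite /a /b; unf2; ring.
    by rewrite d1i ci1; ring.
  have e2 : a * crossR 3 4 2 - b * crossI 3 4 2 = 0.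
    have -> : a * crossR 3 4 2 - b * crossI 3 4 2 = nrm 4 * crossR 3 5 2 - cRw 3 (relv 5) 2.
      by rewrite /a /b; unf2; ring.
    by rewrite d2r cw2; ring.
  have f2 : a * crossI 3 4 2 + b * crossR 3 4 2 = 0.
    have -> : a * crossI 3 4 2 + b * crossR 3 4 2 = nrm 4 * crossI 3 5 2 - cIw 3 (relv 5) 2.
      by rewrite /a /b; unf2; ring.
    by rewrite d2i ci2; ring.
  have hab : (a * a + b * b) * S2 = 0.
    have -> : (a * a + b * b) * S2 =
       (a * crossR 3 4 0 - b * crossI 3 4 0) ^+ 2 + (a * crossI 3 4 0 + b * crossR 3 4 0) ^+ 2
     + (a * crossR 3 4 1 - b * crossI 3 4 1) ^+ 2 + (a * crossI 3 4 1 + b * crossR 3 4 1) ^+ 2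
     + (a * crossR 3 4 2 - b * crossI 3 4 2) ^+ 2 + (a * crossI 3 4 2 + b * crossR 3 4 2) ^+ 2.
      by rewrite /S2; ring.
    by rewrite e0 f0 e1 f1 e2 f2; ring.
  have hb2 : 0 < b * b by rewrite lt_def mulf_neq0 //= -expr2 sqr_ge0.
  have ha2 : 0 <= a * a by rewrite -expr2 sqr_ge0.
  have hab0 : a * a + b * b != 0 by rewrite gt_eqF // ltr_wpDl.
  by move/eqP: hab; rewrite mulf_eq0 (negbTE hab0) => /eqP.
have [s0r [s0i [s1r [s1i [s2r s2i]]]]] := sos6 S20.
have hR3 k : cRw 4 (col 3) k = 0.
  case: k => [|[|[|k]]].
  - by apply: (eq_trans (_ : _ = - crossR 3 4 0)); [unf; ring | rewrite s0r oppr0].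
  - by apply: (eq_trans (_ : _ = - crossR 3 4 1)); [unf; ring | rewrite s1r oppr0].
  - by apply: (eq_trans (_ : _ = - crossR 3 4 2)); [unf; ring | rewrite s2r oppr0].
  - by apply: (eq_trans (_ : _ = - crossR 3 4 2)); [unf; ring | rewrite s2r oppr0].
have hI3 k : cIw 4 (col 3) k = 0.
  case: k => [|[|[|k]]].
  - by apply: (eq_trans (_ : _ = - crossI 3 4 0)); [unf; ring | rewrite s0i oppr0].
  - by apply: (eq_trans (_ : _ = - crossI 3 4 1)); [unf; ring | rewrite s1i oppr0].
  - by apply: (eq_trans (_ : _ = - crossI 3 4 2)); [unf; ring | rewrite s2i oppr0].
  - by apply: (eq_trans (_ : _ = - crossI 3 4 2)); [unf; ring | rewrite s2i oppr0].
have rel3 := rel_lemma hR3 hI3.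
have [q0 j0] := rel3 0%N isT.
have [q1 j1] := rel3 1%N isT.
have [q2 j2] := rel3 2%N isT.
have := @colK6 _ P Pu 0 0 0 (him 4 (col 5) * nrm 4)
   (- (hre 4 (col 3) * him 4 (col 5) - hre 4 (col 5) * him 4 (col 3))) (- (him 4 (col 3) * nrm 4)).
case.
  move=> i; case: i => [|[|[|[|[|[|i]]]]]] // _.
  - apply: (eq_trans (_ : _ = him 4 (col 5) * RelR 4 (col 3) 0 - him 4 (col 3) * RelR 4 (col 5) 0)).
      by unf; ring.
    by rewrite q0 r0; ring.
  - apply: (eq_trans (_ : _ = him 4 (col 5) * RelI 4 (col 3) 0 - him 4 (col 3) * RelI 4 (col 5) 0)).
      by unf; ring.
    by rewrite j0 i0; ring.
  - apply: (eq_trans (_ : _ = him 4 (col 5) * RelR 4 (col 3) 1 - him 4 (col 3) * RelR 4 (col 5) 1)).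
      by unf; ring.
    by rewrite q1 r1; ring.
  - apply: (eq_trans (_ : _ = him 4 (col 5) * RelI 4 (col 3) 1 - him 4 (col 3) * RelI 4 (col 5) 1)).
      by unf; ring.
    by rewrite j1 i1; ring.
  - apply: (eq_trans (_ : _ = him 4 (col 5) * RelR 4 (col 3) 2 - him 4 (col 3) * RelR 4 (col 5) 2)).
      by unf; ring.
    by rewrite q2 r2; ring.
  - apply: (eq_trans (_ : _ = him 4 (col 5) * RelI 4 (col 3) 2 - him 4 (col 3) * RelI 4 (col 5) 2)).
      by unf; ring.
    by rewrite j2 i2; ring.
move=> _ [_ [_ [/eqP]]].
by rewrite mulf_eq0 (negbTE B0) (negbTE N0).
Qed.

End HFAlg.

Section CohAlg.
Variable R : realType.
Variable P : 'M[R]_6.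
Definition th a b := P (o 0) (o a) * P (o 1) (o b) - P (o 0) (o b) * P (o 1) (o a).

Lemma coh_alg (Pu : P \in unitmx) (hth : forall a b, (a < b)%N -> (b < 6)%N -> th a b = 0) : False.
Proof.
have ht a b : (a < 6)%N -> (b < 6)%N -> th a b = 0.
  move=> ha hb; case: (ltngtP a b) => [hab|hab|->]; first exact: hth.
  - by rewrite (_ : th a b = - th b a); [rewrite hth // oppr0 | rewrite /th; ring].
  - by rewrite /th; ring.
have [_ [hn _]] : - (P (o 0) (o 0) * P (o 1) (o 0) + P (o 0) (o 1) * P (o 1) (o 1) + P (o 0) (o 2) * P (o 1) (o 2)
     + P (o 0) (o 3) * P (o 1) (o 3) + P (o 0) (o 4) * P (o 1) (o 4) + P (o 0) (o 5) * P (o 1) (o 5)) = 0 /\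
    P (o 0) (o 0) * P (o 0) (o 0) + P (o 0) (o 1) * P (o 0) (o 1) + (P (o 0) (o 2) * P (o 0) (o 2)
     + P (o 0) (o 3) * P (o 0) (o 3)) + (P (o 0) (o 4) * P (o 0) (o 4) + P (o 0) (o 5) * P (o 0) (o 5)) = 0 /\
    (0 : R) = 0 /\ (0 : R) = 0 /\ (0 : R) = 0 /\ (0 : R) = 0.
  apply: (rowK6 Pu) => j hj.
  transitivity (P (o 0) (o 0) * th 0 j + P (o 0) (o 1) * th 1 j + P (o 0) (o 2) * th 2 j
     + P (o 0) (o 3) * th 3 j + P (o 0) (o 4) * th 4 j + P (o 0) (o 5) * th 5 j).
    by rewrite /th; ring.
  by rewrite !ht //; ring.
have [z0 [z1 [z2 [z3 [z4 z5]]]]] := sos6 hn.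
have [h1 _] : (1 : R) = 0 /\ (0 : R) = 0 /\ (0 : R) = 0 /\ (0 : R) = 0 /\ (0 : R) = 0 /\ (0 : R) = 0.
  apply: (rowK6 Pu) => j; case: j => [|[|[|[|[|[|j]]]]]] // _.
  - by rewrite z0; ring.
  - by rewrite z1; ring.
  - by rewrite z2; ring.
  - by rewrite z3; ring.
  - by rewrite z4; ring.
  - by rewrite z5; ring.
by move/eqP: h1; rewrite oner_eq0.
Qed.
End CohAlg.



Definition OM := addS (addS (wedgeS (etaS 0) (etaS 1)) (wedgeS (etaS 2) (etaS 3))) (wedgeS (etaS 4) (etaS 5)).
Definition PSI := subS (wedgeS (subS (wedgeS (etaS 0) (etaS 2)) (wedgeS (etaS 1) (etaS 3))) (etaS 4))
                       (wedgeS (addS (wedgeS (etaS 0) (etaS 3)) (wedgeS (etaS 1) (etaS 2))) (etaS 5)).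
Definition TH := wedgeS (etaS 0) (etaS 1).

Ltac unf := rewrite /RelR /RelI /W /detR /crossR /crossI /cRw /cIw /col /om /nrm /hre /him /X /Y /=.

Section HF.
Variable R : realType.
Local Notation cform := {ffun {set 'I_6} -> R}.

Lemma PSI_ok (P : 'M[R]_6) (a : cform) :
  rep P a PSI (cwedge (cwedge (Defs.eta P (o 0), Defs.eta P (o 1)) (Defs.eta P (o 2), Defs.eta P (o 3)))
                          (Defs.eta P (o 4), Defs.eta P (o 5))).1.
Proof.
rewrite /cwedge /=; apply: subS_ok; apply: wedgeS_ok; try apply: etaS_ok.
- by apply: subS_ok; apply: wedgeS_ok; apply: etaS_ok.
- by apply: addS_ok; apply: wedgeS_ok; apply: etaS_ok.
Qed.

Lemma OM_ok (P : 'M[R]_6) (a : cform) :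
  rep P a OM (wedge (Defs.eta P (o 0)) (Defs.eta P (o 1)) + wedge (Defs.eta P (o 2)) (Defs.eta P (o 3))
         + wedge (Defs.eta P (o 4)) (Defs.eta P (o 5))).
Proof. by apply: addS_ok; [apply: addS_ok|]; apply: wedgeS_ok; apply: etaS_ok. Qed.

Lemma lin2 (x y : R) : y + x = 0 -> - y + x = 0 -> x = 0 /\ y = 0.
Proof. by move=> h1 h2; split; lra. Qed.

Lemma no_hf1 : ~ has_half_flat (g1 R).
Proof.
move=> [om [psip [[P [Pu [psim [Hom Hpsi]]]] [Hdw Hdp]]]].
have okp : rep P psip PSI psip by move: (PSI_ok P psip); rewrite -(congr1 fst Hpsi).
have oko : rep P psip OM om by rewrite Hom; apply: OM_ok.
have okd : rep P psip (dS gl1 formS) (d (g1 R) psip) by apply: (dS_ok (@g1L R)); apply: formS_ok.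
have row K : interp P psip (dS gl1 formS K) = 0 by rewrite okd Hdp ffun0E.
have := row 29%N; vmcomp (dS gl1 formS 29); rewrite /= => r29.
have := row 51%N; vmcomp (dS gl1 formS 51); rewrite /= => r51.
have := row 53%N; vmcomp (dS gl1 formS 53); rewrite /= => r53.
have := row 43%N; vmcomp (dS gl1 formS 43); rewrite /= => r43.
have := row 30%N; vmcomp (dS gl1 formS 30); rewrite /= => r30.
have := row 39%N; vmcomp (dS gl1 formS 39); rewrite /= => r39.
have ps m : psip (sidx m) = interp P psip (PSI m) by rewrite okp.
have e49 : psip (sidx 49) = detR P 0 4 5 by rewrite ps; vmcomp (PSI 49); rewrite /=; unf; ring.
have e50 : psip (sidx 50) = detR P 1 4 5 by rewrite ps; vmcomp (PSI 50); rewrite /=; unf; ring.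
have e52 : psip (sidx 52) = detR P 2 4 5 by rewrite ps; vmcomp (PSI 52); rewrite /=; unf; ring.
have e56 : psip (sidx 56) = detR P 3 4 5 by rewrite ps; vmcomp (PSI 56); rewrite /=; unf; ring.
have e42 : psip (sidx 42) = detR P 1 3 5 by rewrite ps; vmcomp (PSI 42); rewrite /=; unf; ring.
have e44 : psip (sidx 44) = detR P 2 3 5 by rewrite ps; vmcomp (PSI 44); rewrite /=; unf; ring.
have okw : rep P psip (wedgeS (dS gl1 OM) OM) (wedge (d (g1 R) om) om).
  by apply: wedgeS_ok => //; apply: (dS_ok (@g1L R)).
have := okw 55%N; rewrite Hdw ffun0E; vmcomp (wedgeS (dS gl1 OM) OM 55); rewrite /= => w55.
have := okw 59%N; rewrite Hdw ffun0E; vmcomp (wedgeS (dS gl1 OM) OM 59); rewrite /= => w59.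
have hW1 : W P 1 = 0 by apply: (eq_trans _ w55); unf; ring.
have hW2 : W P 2 = 0 by apply: (eq_trans _ w59); unf; ring.
apply: (hf_alg Pu _ _ _ _ _ _ hW1 hW2).
- by rewrite -e49.
- by rewrite -e50; case: (lin2 r43 r30).
- by rewrite -e52.
- by rewrite -e56.
- by rewrite -e42.
- by rewrite -e44; case: (lin2 r43 r30).
Qed.

Lemma no_hf2 : ~ has_half_flat (g2 R).
Proof.
move=> [om [psip [[P [Pu [psim [Hom Hpsi]]]] [Hdw Hdp]]]].
have okp : rep P psip PSI psip by move: (PSI_ok P psip); rewrite -(congr1 fst Hpsi).
have oko : rep P psip OM om by rewrite Hom; apply: OM_ok.
have okd : rep P psip (dS gl2 formS) (d (g2 R) psip) by apply: (dS_ok (@g2L R)); apply: formS_ok.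
have row K : interp P psip (dS gl2 formS K) = 0 by rewrite okd Hdp ffun0E.
have := row 29%N; vmcomp (dS gl2 formS 29); rewrite /= => r29.
have := row 51%N; vmcomp (dS gl2 formS 51); rewrite /= => r51.
have := row 53%N; vmcomp (dS gl2 formS 53); rewrite /= => r53.
have := row 43%N; vmcomp (dS gl2 formS 43); rewrite /= => r43.
have := row 30%N; vmcomp (dS gl2 formS 30); rewrite /= => r30.
have := row 39%N; vmcomp (dS gl2 formS 39); rewrite /= => r39.
have ps m : psip (sidx m) = interp P psip (PSI m) by rewrite okp.
have e49 : psip (sidx 49) = detR P 0 4 5 by rewrite ps; vmcomp (PSI 49); rewrite /=; unf; ring.
have e50 : psip (sidx 50) = detR P 1 4 5 by rewrite ps; vmcomp (PSI 50); rewrite /=; unf; ring.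
have e52 : psip (sidx 52) = detR P 2 4 5 by rewrite ps; vmcomp (PSI 52); rewrite /=; unf; ring.
have e56 : psip (sidx 56) = detR P 3 4 5 by rewrite ps; vmcomp (PSI 56); rewrite /=; unf; ring.
have e42 : psip (sidx 42) = detR P 1 3 5 by rewrite ps; vmcomp (PSI 42); rewrite /=; unf; ring.
have e44 : psip (sidx 44) = detR P 2 3 5 by rewrite ps; vmcomp (PSI 44); rewrite /=; unf; ring.
have okw : rep P psip (wedgeS (dS gl2 OM) OM) (wedge (d (g2 R) om) om).
  by apply: wedgeS_ok => //; apply: (dS_ok (@g2L R)).
have := okw 55%N; rewrite Hdw ffun0E; vmcomp (wedgeS (dS gl2 OM) OM 55); rewrite /= => w55.
have := okw 59%N; rewrite Hdw ffun0E; vmcomp (wedgeS (dS gl2 OM) OM 59); rewrite /= => w59.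
have hW1 : W P 1 = 0 by apply: (eq_trans _ w55); unf; ring.
have hW2 : W P 2 = 0 by apply: (eq_trans _ w59); unf; ring.
apply: (hf_alg Pu _ _ _ _ _ _ hW1 hW2).
- by rewrite -e49.
- by rewrite -e50; case: (lin2 r43 r30).
- by rewrite -e52.
- by rewrite -e56.
- by rewrite -e42; move: r39; rewrite r29 => h; apply: (eq_trans _ h); ring.
- by rewrite -e44; case: (lin2 r43 r30).
Qed.



Lemma wedge_one (a : cform) : wedge a (one_form R) = a.
Proof.
apply/ffunP => K; rewrite /one_form WBr sub0set setD0.
have -> : inv_cnt K set0 = 0%N.
  by apply/eqP; rewrite /inv_cnt cards_eq0; apply/eqP; apply/setP => p; rewrite !inE /= andbF.
by rewrite expr0 mul1r.
Qed.

Lemma eta_span (P : 'M[R]_6) (i : 'I_6) :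
  in_span P (Lam (if (i < 2)%N then 1 else 0) (if (i < 2)%N then 0 else 1)) (Defs.eta P i).
Proof.
exists (fun J => (J == [set i])%:R).
have hL : Lam (if (i < 2)%N then 1 else 0) (if (i < 2)%N then 0 else 1) [set i].
  rewrite /Lam /bideg; case: (ltnP i 2) => hi.
  - have -> : [set j in [set i] | (j < 2)%N] = [set i].
      by apply/setP => j; rewrite !inE; case: eqP => // ->; rewrite hi.
    have -> : [set j in [set i] | (2 <= j)%N] = set0.
      by apply/setP => j; rewrite !inE; case: eqP => // ->; rewrite leqNgt hi.
    by rewrite cards1 cards0.
  - have -> : [set j in [set i] | (j < 2)%N] = set0.
      by apply/setP => j; rewrite !inE; case: eqP => // ->; rewrite ltnNge hi.
    have -> : [set j in [set i] | (2 <= j)%N] = [set i].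
      by apply/setP => j; rewrite !inE; case: eqP => // ->; rewrite hi.
    by rewrite cards1 cards0.
rewrite (bigD1 [set i]) //= big1 ?addr0; last first.
  by move=> J /andP[_ /negbTE ->]; apply/ffunP => K; rewrite scE mul0r ffun0E.
rewrite eqxx /etaw enum_set1 /= wedge_one; apply/ffunP => K; by rewrite scE mul1r.
Qed.

Lemma S_char (J : {set 'I_6}) (p q : nat) : (p = 1 /\ q = 0 \/ p = 0 /\ q = 1)%N ->
  (Lam p.+1 q J || ((bideg J).1 == p.+2) && ((bideg J).2.+1 == q)) ->
  exists x y, enum J = [:: x; y] /\ ((x < 2)%N || (y < 2)%N).
Proof.
move=> hpq H.
have hc : #|J| = ((bideg J).1 + (bideg J).2)%N.
  rewrite /bideg /= -(cardsID [set j : 'I_6 | (j < 2)%N] J).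
  congr (_ + _)%N; apply: eq_card => j; rewrite !inE //.
  by rewrite -leqNgt andbC.
move: H hc; rewrite /Lam; case E: (bideg J) => [b1 b2] /= H hc.
move: E; rewrite /bideg => -[e1 _].
have [hJ hb1] : #|J| = 2%N /\ (0 < b1)%N.
  case: hpq => [[-> ->]|[-> ->]] in H; rewrite hc.
  - by case/orP: H => [/eqP [-> ->]|/andP[_ //]].
  - case/orP: H => [/eqP [-> ->]|/andP[/eqP -> /eqP]] //.
    by case=> ->.
have [j hj] : exists j, j \in [set j in J | (j < 2)%N] by apply/set0Pn; rewrite -card_gt0 e1.
move: hj; rewrite inE => /andP [hjJ hj2].
have := cardE J; rewrite hJ; case hE : (enum J) => [|x [|y [|z l]]] //= _.
exists x, y; split => //.
have : j \in enum J by rewrite mem_enum.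
by rewrite hE !inE => /orP [/eqP <-|/eqP <-]; rewrite hj2 ?orbT.
Qed.


Lemma wedge_sumsc (a : cform) (Q : pred {set 'I_6}) (c : {set 'I_6} -> R) (F : {set 'I_6} -> cform) K :
  (wedge a (\sum_(J | Q J) sc (c J) (F J))) K = \sum_(J | Q J) c J * (wedge a (F J)) K.
Proof.
rewrite WK0.
transitivity (\sum_(I : {set 'I_6}) \sum_(J | Q J)
   (if I \subset K then (-1) ^+ inv_cnt I (K :\: I) * a I * (c J * F J (K :\: I)) else 0)).
  apply: eq_bigr => I _; case: ifP => _; last by rewrite big1.
  by rewrite sum_ffunE mulr_sumr; apply: eq_bigr => J _; rewrite scE.
rewrite exchange_big; apply: eq_bigr => J _; rewrite WK0 mulr_sumr; apply: eq_bigr => I _.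
by case: ifP => _; [ring | rewrite mulr0].
Qed.

Lemma th_etaw (P : 'M[R]_6) (x y : 'I_6) (hxy : (x < 2)%N || (y < 2)%N) (K : nat)
  (hK : K \in [:: 15; 23; 39; 27; 43; 51; 29; 45]%N) :
  (wedge (wedge (Defs.eta P (o 0)) (Defs.eta P (o 1))) (wedge (Defs.eta P x) (wedge (Defs.eta P y) (one_form R)))) (sidx K) = 0.
Proof.
rewrite wedge_one -(o_val x) -(o_val y).
have ok : rep P (0 : cform) (wedgeS TH (wedgeS (etaS x) (etaS y)))
   (wedge (wedge (Defs.eta P (o 0)) (Defs.eta P (o 1))) (wedge (Defs.eta P (o x)) (Defs.eta P (o y)))).
  by apply: wedgeS_ok; apply: wedgeS_ok; apply: etaS_ok.
rewrite -ok.
have h01 : (nat_of_ord x = 0 \/ nat_of_ord x = 1 \/ nat_of_ord y = 0 \/ nat_of_ord y = 1)%N.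
  by case/orP: hxy; [case: (nat_of_ord x) => [|[|]] // _; tauto | case: (nat_of_ord y) => [|[|]] // _; tauto].
move: h01; move: (nat_of_ord x) (nat_of_ord y) => nx ny h01.
move: hK; rewrite !inE => /orP[/eqP->|/orP[/eqP->|/orP[/eqP->|/orP[/eqP->|/orP[/eqP->|/orP[/eqP->|/orP[/eqP->|/eqP->]]]]]]].
all: match goal with |- interp _ _ ?t = 0 => vmcomp t end; rewrite /=.
all: by case: h01 => [->|[->|[->|->]]]; ring.
Qed.


Lemma colstep (P : 'M[R]_6) (Pu : P \in unitmx) (a : cform) (E : nat -> pe) (v : nat -> pe) :
  (forall i, (i < 6)%N -> interp P a (E i) = 0) ->
  (forall i, (i < 6)%N -> interp P a (E i) = P (o i) (o 0) * interp P a (v 0%N) + P (o i) (o 1) * interp P a (v 1%N)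
     + P (o i) (o 2) * interp P a (v 2%N) + P (o i) (o 3) * interp P a (v 3%N)
     + P (o i) (o 4) * interp P a (v 4%N) + P (o i) (o 5) * interp P a (v 5%N)) ->
  forall j, (j < 6)%N -> interp P a (v j) = 0.
Proof.
move=> h1 h2.
have [z0 [z1 [z2 [z3 [z4 z5]]]]] := colK6 Pu (fun i hi => etrans (esym (h2 i hi)) (h1 i hi)).
by case=> [|[|[|[|[|[|j]]]]]] // _.
Qed.

Lemma TH_ok (P : 'M[R]_6) (a : cform) : rep P a TH (wedge (Defs.eta P (o 0)) (Defs.eta P (o 1))).
Proof. by apply: wedgeS_ok; apply: etaS_ok. Qed.

Lemma eq0_pm (x e : R) : e = 0 -> (x = e \/ x = - e) -> x = 0.
Proof. by move=> -> [->|->]; rewrite ?oppr0. Qed.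

Ltac pm := first [left; rewrite /th; ring | right; rewrite /th; ring].

Lemma no_coh1 : ~ has_coherent_splitting (g1 R).
Proof.
move=> [P [Pu Hc]].
have stepb (i : nat) (K : nat) (hK : K \in [:: 15; 23; 39; 27; 43; 51; 29; 45]%N) :
   (wedge (wedge (Defs.eta P (o 0)) (Defs.eta P (o 1))) (d (g1 R) (Defs.eta P (o i)))) (sidx K) = 0.
  have [c ->] := Hc _ _ _ (eta_span P (o i)).
  rewrite wedge_sumsc; apply: big1 => J HJ.
  have [x [y [hE hxy]]] : exists x y, enum J = [:: x; y] /\ ((x < 2)%N || (y < 2)%N).
    by apply: (S_char _ HJ); case: ifP => _; tauto.
  by rewrite /etaw hE /= th_etaw // mulr0.
have h1 K (hK : K \in [:: 15; 23; 39; 27; 43; 51; 29; 45]%N) i (hi : (i < 6)%N) :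
    interp P (0 : cform) (wedgeS TH (dS gl1 (etaS i)) K) = 0.
  by rewrite (wedgeS_ok (TH_ok P 0) (dS_ok (@g1L R) (etaS_ok P 0 i))) stepb.
have v15 := colstep Pu (E := fun i => wedgeS TH (dS gl1 (etaS i)) 15) (v := fun j => wedgeS TH (gS gl1 j) 15) (h1 15%N isT).
have {}v15 : forall j, (j < 6)%N -> interp P (0 : cform) (wedgeS TH (gS gl1 j) 15) = 0.
  apply: v15 => i _; cbv beta; vmcomp (wedgeS TH (dS gl1 (etaS i)) 15).
  try vmcomp (wedgeS TH (gS gl1 0) 15); try vmcomp (wedgeS TH (gS gl1 1) 15); try vmcomp (wedgeS TH (gS gl1 2) 15).
  try vmcomp (wedgeS TH (gS gl1 3) 15); try vmcomp (wedgeS TH (gS gl1 4) 15); try vmcomp (wedgeS TH (gS gl1 5) 15).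
  by rewrite /=; ring.
have v23 := colstep Pu (E := fun i => wedgeS TH (dS gl1 (etaS i)) 23) (v := fun j => wedgeS TH (gS gl1 j) 23) (h1 23%N isT).
have {}v23 : forall j, (j < 6)%N -> interp P (0 : cform) (wedgeS TH (gS gl1 j) 23) = 0.
  apply: v23 => i _; cbv beta; vmcomp (wedgeS TH (dS gl1 (etaS i)) 23).
  try vmcomp (wedgeS TH (gS gl1 0) 23); try vmcomp (wedgeS TH (gS gl1 1) 23); try vmcomp (wedgeS TH (gS gl1 2) 23).
  try vmcomp (wedgeS TH (gS gl1 3) 23); try vmcomp (wedgeS TH (gS gl1 4) 23); try vmcomp (wedgeS TH (gS gl1 5) 23).
  by rewrite /=; ring.
have v39 := colstep Pu (E := fun i => wedgeS TH (dS gl1 (etaS i)) 39) (v := fun j => wedgeS TH (gS gl1 j) 39) (h1 39%N isT).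
have {}v39 : forall j, (j < 6)%N -> interp P (0 : cform) (wedgeS TH (gS gl1 j) 39) = 0.
  apply: v39 => i _; cbv beta; vmcomp (wedgeS TH (dS gl1 (etaS i)) 39).
  try vmcomp (wedgeS TH (gS gl1 0) 39); try vmcomp (wedgeS TH (gS gl1 1) 39); try vmcomp (wedgeS TH (gS gl1 2) 39).
  try vmcomp (wedgeS TH (gS gl1 3) 39); try vmcomp (wedgeS TH (gS gl1 4) 39); try vmcomp (wedgeS TH (gS gl1 5) 39).
  by rewrite /=; ring.
have v27 := colstep Pu (E := fun i => wedgeS TH (dS gl1 (etaS i)) 27) (v := fun j => wedgeS TH (gS gl1 j) 27) (h1 27%N isT).
have {}v27 : forall j, (j < 6)%N -> interp P (0 : cform) (wedgeS TH (gS gl1 j) 27) = 0.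
  apply: v27 => i _; cbv beta; vmcomp (wedgeS TH (dS gl1 (etaS i)) 27).
  try vmcomp (wedgeS TH (gS gl1 0) 27); try vmcomp (wedgeS TH (gS gl1 1) 27); try vmcomp (wedgeS TH (gS gl1 2) 27).
  try vmcomp (wedgeS TH (gS gl1 3) 27); try vmcomp (wedgeS TH (gS gl1 4) 27); try vmcomp (wedgeS TH (gS gl1 5) 27).
  by rewrite /=; ring.
have v43 := colstep Pu (E := fun i => wedgeS TH (dS gl1 (etaS i)) 43) (v := fun j => wedgeS TH (gS gl1 j) 43) (h1 43%N isT).
have {}v43 : forall j, (j < 6)%N -> interp P (0 : cform) (wedgeS TH (gS gl1 j) 43) = 0.
  apply: v43 => i _; cbv beta; vmcomp (wedgeS TH (dS gl1 (etaS i)) 43).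
  try vmcomp (wedgeS TH (gS gl1 0) 43); try vmcomp (wedgeS TH (gS gl1 1) 43); try vmcomp (wedgeS TH (gS gl1 2) 43).
  try vmcomp (wedgeS TH (gS gl1 3) 43); try vmcomp (wedgeS TH (gS gl1 4) 43); try vmcomp (wedgeS TH (gS gl1 5) 43).
  by rewrite /=; ring.
have v51 := colstep Pu (E := fun i => wedgeS TH (dS gl1 (etaS i)) 51) (v := fun j => wedgeS TH (gS gl1 j) 51) (h1 51%N isT).
have {}v51 : forall j, (j < 6)%N -> interp P (0 : cform) (wedgeS TH (gS gl1 j) 51) = 0.
  apply: v51 => i _; cbv beta; vmcomp (wedgeS TH (dS gl1 (etaS i)) 51).
  try vmcomp (wedgeS TH (gS gl1 0) 51); try vmcomp (wedgeS TH (gS gl1 1) 51); try vmcomp (wedgeS TH (gS gl1 2) 51).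
  try vmcomp (wedgeS TH (gS gl1 3) 51); try vmcomp (wedgeS TH (gS gl1 4) 51); try vmcomp (wedgeS TH (gS gl1 5) 51).
  by rewrite /=; ring.
have v29 := colstep Pu (E := fun i => wedgeS TH (dS gl1 (etaS i)) 29) (v := fun j => wedgeS TH (gS gl1 j) 29) (h1 29%N isT).
have {}v29 : forall j, (j < 6)%N -> interp P (0 : cform) (wedgeS TH (gS gl1 j) 29) = 0.
  apply: v29 => i _; cbv beta; vmcomp (wedgeS TH (dS gl1 (etaS i)) 29).
  try vmcomp (wedgeS TH (gS gl1 0) 29); try vmcomp (wedgeS TH (gS gl1 1) 29); try vmcomp (wedgeS TH (gS gl1 2) 29).
  try vmcomp (wedgeS TH (gS gl1 3) 29); try vmcomp (wedgeS TH (gS gl1 4) 29); try vmcomp (wedgeS TH (gS gl1 5) 29).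
  by rewrite /=; ring.
have v45 := colstep Pu (E := fun i => wedgeS TH (dS gl1 (etaS i)) 45) (v := fun j => wedgeS TH (gS gl1 j) 45) (h1 45%N isT).
have {}v45 : forall j, (j < 6)%N -> interp P (0 : cform) (wedgeS TH (gS gl1 j) 45) = 0.
  apply: v45 => i _; cbv beta; vmcomp (wedgeS TH (dS gl1 (etaS i)) 45).
  try vmcomp (wedgeS TH (gS gl1 0) 45); try vmcomp (wedgeS TH (gS gl1 1) 45); try vmcomp (wedgeS TH (gS gl1 2) 45).
  try vmcomp (wedgeS TH (gS gl1 3) 45); try vmcomp (wedgeS TH (gS gl1 4) 45); try vmcomp (wedgeS TH (gS gl1 5) 45).
  by rewrite /=; ring.
have t23 : th P 2 3 = 0.
  have := v15 2%N isT; try vmcomp (wedgeS TH (gS gl1 2) 15); rewrite /= => h.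
  by apply: (eq0_pm h); pm.
have t24 : th P 2 4 = 0.
  have := v23 2%N isT; try vmcomp (wedgeS TH (gS gl1 2) 23); rewrite /= => h.
  by apply: (eq0_pm h); pm.
have t25 : th P 2 5 = 0.
  have := v39 2%N isT; try vmcomp (wedgeS TH (gS gl1 2) 39); rewrite /= => h.
  by apply: (eq0_pm h); pm.
have t34 : th P 3 4 = 0.
  have := v27 2%N isT; try vmcomp (wedgeS TH (gS gl1 2) 27); rewrite /= => h.
  by apply: (eq0_pm h); pm.
have t35 : th P 3 5 = 0.
  have := v43 2%N isT; try vmcomp (wedgeS TH (gS gl1 2) 43); rewrite /= => h.
  by apply: (eq0_pm h); pm.
have t45 : th P 4 5 = 0.
  have := v51 2%N isT; try vmcomp (wedgeS TH (gS gl1 2) 51); rewrite /= => h.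
  by apply: (eq0_pm h); pm.
have t13 : th P 1 3 = 0.
  have := v15 3%N isT; try vmcomp (wedgeS TH (gS gl1 3) 15); rewrite /= => h.
  by apply: (eq0_pm h); pm.
have t14 : th P 1 4 = 0.
  have := v23 3%N isT; try vmcomp (wedgeS TH (gS gl1 3) 23); rewrite /= => h.
  by apply: (eq0_pm h); pm.
have t15 : th P 1 5 = 0.
  have := v39 3%N isT; try vmcomp (wedgeS TH (gS gl1 3) 39); rewrite /= => h.
  by apply: (eq0_pm h); pm.
have t01 : th P 0 1 = 0.
  have := v15 5%N isT; try vmcomp (wedgeS TH (gS gl1 5) 15); rewrite /= => h.
  by apply: (eq0_pm h); pm.
have t02 : th P 0 2 = 0.
  have := v23 5%N isT; try vmcomp (wedgeS TH (gS gl1 5) 23); rewrite /= => h.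
  by apply: (eq0_pm h); pm.
have t03 : th P 0 3 = 0.
  have := v27 5%N isT; try vmcomp (wedgeS TH (gS gl1 5) 27); rewrite /= => h.
  by apply: (eq0_pm h); pm.
have t04 : th P 0 4 = 0.
  have := v29 5%N isT; try vmcomp (wedgeS TH (gS gl1 5) 29); rewrite /= => h.
  by apply: (eq0_pm h); pm.
have t05 : th P 0 5 = 0.
  have := v45 5%N isT; try vmcomp (wedgeS TH (gS gl1 5) 45); rewrite /= => h.
  by apply: (eq0_pm h); pm.
have t12 : th P 1 2 = 0.
  have := v15 4%N isT; try vmcomp (wedgeS TH (gS gl1 4) 15); rewrite /= => h.
  by apply: (eq0_pm h); pm.
apply: (coh_alg Pu) => a b hab hb.
case: b hb hab => [|[|[|[|[|[|b]]]]]] // _; case: a => [|[|[|[|[|a]]]]] //.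
Qed.


Lemma no_coh2 : ~ has_coherent_splitting (g2 R).
Proof.
move=> [P [Pu Hc]].
have stepb (i : nat) (K : nat) (hK : K \in [:: 15; 23; 39; 27; 43; 51; 29; 45]%N) :
   (wedge (wedge (Defs.eta P (o 0)) (Defs.eta P (o 1))) (d (g2 R) (Defs.eta P (o i)))) (sidx K) = 0.
  have [c ->] := Hc _ _ _ (eta_span P (o i)).
  rewrite wedge_sumsc; apply: big1 => J HJ.
  have [x [y [hE hxy]]] : exists x y, enum J = [:: x; y] /\ ((x < 2)%N || (y < 2)%N).
    by apply: (S_char _ HJ); case: ifP => _; tauto.
  by rewrite /etaw hE /= th_etaw // mulr0.
have h1 K (hK : K \in [:: 15; 23; 39; 27; 43; 51; 29; 45]%N) i (hi : (i < 6)%N) :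
    interp P (0 : cform) (wedgeS TH (dS gl2 (etaS i)) K) = 0.
  by rewrite (wedgeS_ok (TH_ok P 0) (dS_ok (@g2L R) (etaS_ok P 0 i))) stepb.
have v15 := colstep Pu (E := fun i => wedgeS TH (dS gl2 (etaS i)) 15) (v := fun j => wedgeS TH (gS gl2 j) 15) (h1 15%N isT).
have {}v15 : forall j, (j < 6)%N -> interp P (0 : cform) (wedgeS TH (gS gl2 j) 15) = 0.
  apply: v15 => i _; cbv beta; vmcomp (wedgeS TH (dS gl2 (etaS i)) 15).
  try vmcomp (wedgeS TH (gS gl2 0) 15); try vmcomp (wedgeS TH (gS gl2 1) 15); try vmcomp (wedgeS TH (gS gl2 2) 15).
  try vmcomp (wedgeS TH (gS gl2 3) 15); try vmcomp (wedgeS TH (gS gl2 4) 15); try vmcomp (wedgeS TH (gS gl2 5) 15).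
  by rewrite /=; ring.
have v23 := colstep Pu (E := fun i => wedgeS TH (dS gl2 (etaS i)) 23) (v := fun j => wedgeS TH (gS gl2 j) 23) (h1 23%N isT).
have {}v23 : forall j, (j < 6)%N -> interp P (0 : cform) (wedgeS TH (gS gl2 j) 23) = 0.
  apply: v23 => i _; cbv beta; vmcomp (wedgeS TH (dS gl2 (etaS i)) 23).
  try vmcomp (wedgeS TH (gS gl2 0) 23); try vmcomp (wedgeS TH (gS gl2 1) 23); try vmcomp (wedgeS TH (gS gl2 2) 23).
  try vmcomp (wedgeS TH (gS gl2 3) 23); try vmcomp (wedgeS TH (gS gl2 4) 23); try vmcomp (wedgeS TH (gS gl2 5) 23).
  by rewrite /=; ring.
have v39 := colstep Pu (E := fun i => wedgeS TH (dS gl2 (etaS i)) 39) (v := fun j => wedgeS TH (gS gl2 j) 39) (h1 39%N isT).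
have {}v39 : forall j, (j < 6)%N -> interp P (0 : cform) (wedgeS TH (gS gl2 j) 39) = 0.
  apply: v39 => i _; cbv beta; vmcomp (wedgeS TH (dS gl2 (etaS i)) 39).
  try vmcomp (wedgeS TH (gS gl2 0) 39); try vmcomp (wedgeS TH (gS gl2 1) 39); try vmcomp (wedgeS TH (gS gl2 2) 39).
  try vmcomp (wedgeS TH (gS gl2 3) 39); try vmcomp (wedgeS TH (gS gl2 4) 39); try vmcomp (wedgeS TH (gS gl2 5) 39).
  by rewrite /=; ring.
have v27 := colstep Pu (E := fun i => wedgeS TH (dS gl2 (etaS i)) 27) (v := fun j => wedgeS TH (gS gl2 j) 27) (h1 27%N isT).
have {}v27 : forall j, (j < 6)%N -> interp P (0 : cform) (wedgeS TH (gS gl2 j) 27) = 0.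
  apply: v27 => i _; cbv beta; vmcomp (wedgeS TH (dS gl2 (etaS i)) 27).
  try vmcomp (wedgeS TH (gS gl2 0) 27); try vmcomp (wedgeS TH (gS gl2 1) 27); try vmcomp (wedgeS TH (gS gl2 2) 27).
  try vmcomp (wedgeS TH (gS gl2 3) 27); try vmcomp (wedgeS TH (gS gl2 4) 27); try vmcomp (wedgeS TH (gS gl2 5) 27).
  by rewrite /=; ring.
have v43 := colstep Pu (E := fun i => wedgeS TH (dS gl2 (etaS i)) 43) (v := fun j => wedgeS TH (gS gl2 j) 43) (h1 43%N isT).
have {}v43 : forall j, (j < 6)%N -> interp P (0 : cform) (wedgeS TH (gS gl2 j) 43) = 0.
  apply: v43 => i _; cbv beta; vmcomp (wedgeS TH (dS gl2 (etaS i)) 43).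
  try vmcomp (wedgeS TH (gS gl2 0) 43); try vmcomp (wedgeS TH (gS gl2 1) 43); try vmcomp (wedgeS TH (gS gl2 2) 43).
  try vmcomp (wedgeS TH (gS gl2 3) 43); try vmcomp (wedgeS TH (gS gl2 4) 43); try vmcomp (wedgeS TH (gS gl2 5) 43).
  by rewrite /=; ring.
have v51 := colstep Pu (E := fun i => wedgeS TH (dS gl2 (etaS i)) 51) (v := fun j => wedgeS TH (gS gl2 j) 51) (h1 51%N isT).
have {}v51 : forall j, (j < 6)%N -> interp P (0 : cform) (wedgeS TH (gS gl2 j) 51) = 0.
  apply: v51 => i _; cbv beta; vmcomp (wedgeS TH (dS gl2 (etaS i)) 51).
  try vmcomp (wedgeS TH (gS gl2 0) 51); try vmcomp (wedgeS TH (gS gl2 1) 51); try vmcomp (wedgeS TH (gS gl2 2) 51).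
  try vmcomp (wedgeS TH (gS gl2 3) 51); try vmcomp (wedgeS TH (gS gl2 4) 51); try vmcomp (wedgeS TH (gS gl2 5) 51).
  by rewrite /=; ring.
have v29 := colstep Pu (E := fun i => wedgeS TH (dS gl2 (etaS i)) 29) (v := fun j => wedgeS TH (gS gl2 j) 29) (h1 29%N isT).
have {}v29 : forall j, (j < 6)%N -> interp P (0 : cform) (wedgeS TH (gS gl2 j) 29) = 0.
  apply: v29 => i _; cbv beta; vmcomp (wedgeS TH (dS gl2 (etaS i)) 29).
  try vmcomp (wedgeS TH (gS gl2 0) 29); try vmcomp (wedgeS TH (gS gl2 1) 29); try vmcomp (wedgeS TH (gS gl2 2) 29).
  try vmcomp (wedgeS TH (gS gl2 3) 29); try vmcomp (wedgeS TH (gS gl2 4) 29); try vmcomp (wedgeS TH (gS gl2 5) 29).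
  by rewrite /=; ring.
have v45 := colstep Pu (E := fun i => wedgeS TH (dS gl2 (etaS i)) 45) (v := fun j => wedgeS TH (gS gl2 j) 45) (h1 45%N isT).
have {}v45 : forall j, (j < 6)%N -> interp P (0 : cform) (wedgeS TH (gS gl2 j) 45) = 0.
  apply: v45 => i _; cbv beta; vmcomp (wedgeS TH (dS gl2 (etaS i)) 45).
  try vmcomp (wedgeS TH (gS gl2 0) 45); try vmcomp (wedgeS TH (gS gl2 1) 45); try vmcomp (wedgeS TH (gS gl2 2) 45).
  try vmcomp (wedgeS TH (gS gl2 3) 45); try vmcomp (wedgeS TH (gS gl2 4) 45); try vmcomp (wedgeS TH (gS gl2 5) 45).
  by rewrite /=; ring.
have t23 : th P 2 3 = 0.
  have := v15 2%N isT; try vmcomp (wedgeS TH (gS gl2 2) 15); rewrite /= => h.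
  by apply: (eq0_pm h); pm.
have t24 : th P 2 4 = 0.
  have := v23 2%N isT; try vmcomp (wedgeS TH (gS gl2 2) 23); rewrite /= => h.
  by apply: (eq0_pm h); pm.
have t25 : th P 2 5 = 0.
  have := v39 2%N isT; try vmcomp (wedgeS TH (gS gl2 2) 39); rewrite /= => h.
  by apply: (eq0_pm h); pm.
have t34 : th P 3 4 = 0.
  have := v27 2%N isT; try vmcomp (wedgeS TH (gS gl2 2) 27); rewrite /= => h.
  by apply: (eq0_pm h); pm.
have t35 : th P 3 5 = 0.
  have := v43 2%N isT; try vmcomp (wedgeS TH (gS gl2 2) 43); rewrite /= => h.
  by apply: (eq0_pm h); pm.
have t45 : th P 4 5 = 0.
  have := v51 2%N isT; try vmcomp (wedgeS TH (gS gl2 2) 51); rewrite /= => h.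
  by apply: (eq0_pm h); pm.
have t13 : th P 1 3 = 0.
  have := v15 3%N isT; try vmcomp (wedgeS TH (gS gl2 3) 15); rewrite /= => h.
  by apply: (eq0_pm h); pm.
have t14 : th P 1 4 = 0.
  have := v23 3%N isT; try vmcomp (wedgeS TH (gS gl2 3) 23); rewrite /= => h.
  by apply: (eq0_pm h); pm.
have t15 : th P 1 5 = 0.
  have := v39 3%N isT; try vmcomp (wedgeS TH (gS gl2 3) 39); rewrite /= => h.
  by apply: (eq0_pm h); pm.
have t01 : th P 0 1 = 0.
  have := v15 5%N isT; try vmcomp (wedgeS TH (gS gl2 5) 15); rewrite /= => h.
  by apply: (eq0_pm h); pm.
have t02 : th P 0 2 = 0.
  have := v23 5%N isT; try vmcomp (wedgeS TH (gS gl2 5) 23); rewrite /= => h.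
  by apply: (eq0_pm h); pm.
have t03 : th P 0 3 = 0.
  have := v27 5%N isT; try vmcomp (wedgeS TH (gS gl2 5) 27); rewrite /= => h.
  by apply: (eq0_pm h); pm.
have t04 : th P 0 4 = 0.
  have := v29 5%N isT; try vmcomp (wedgeS TH (gS gl2 5) 29); rewrite /= => h.
  by apply: (eq0_pm h); pm.
have t05 : th P 0 5 = 0.
  have := v45 5%N isT; try vmcomp (wedgeS TH (gS gl2 5) 45); rewrite /= => h.
  by apply: (eq0_pm h); pm.
have t12 : th P 1 2 = 0.
  have := v15 4%N isT; try vmcomp (wedgeS TH (gS gl2 4) 15); rewrite /= => h.
  have h' : th P 1 2 + th P 0 3 = 0 by apply: (eq0_pm h); pm.
  by move: h'; rewrite t03 addr0.
apply: (coh_alg Pu) => a b hab hb.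
case: b hb hab => [|[|[|[|[|[|b]]]]]] // _; case: a => [|[|[|[|[|a]]]]] //.
Qed.

End HF.

Theorem lemma8 (R : realType) (de : structure R) :
  de = g1 R \/ de = g2 R ->
  ~ has_coherent_splitting de /\ ~ has_half_flat de.
Proof.
by case=> ->; split; [apply: no_coh1 | apply: no_hf1 | apply: no_coh2 | apply: no_hf2].
Qed.
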